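(* Let $u$ be a smooth solution of the problem below on $[0,T)$ with smooth initial data $u_0$, under either periodic or Dirichlet boundary conditions. Then for all $t\in[0,T)$ and $\alpha\in[0,1]$, with $\eta(t)$ the solution of $\dot\eta(t)=\bar{\mathcal K}_0(t)^{-2}$, $\eta(0)=0$, one has $\mathcal J(\alpha,t)>0$, $$\gamma_\alpha(\alpha,t)=\frac{\mathcal K_0(\alpha,t)}{\bar{\mathcal K}_0(t)},$$ and $$u_x(\gamma(\alpha,t),t)=\frac{1}{\eta(t)\,\bar{\mathcal K}_0(t)^2}\left(\frac{1}{\mathcal J(\alpha,t)}-\frac{\bar{\mathcal K}_1(t)}{\bar{\mathcal K}_0(t)}\right)$$ (for $t>0$).
   Context: The problem: $u_{xt}+u u_{xx}-u_x^2=-2\int_0^1 u_x^2\,dx$ for $t>0$, $x\in[0,1]$, $u(x,0)=u_0(x)$, with either periodic boundary conditions $u(0,t)=u(1,t)$, $u_x(0,t)=u_x(1,t)$ or Dirichlet boundary conditions $u(0,t)=u(1,t)=0$. The Lagrangian flow $\gamma(\alpha,t)$ is defined by $\dot\gamma(\alpha,t)=u(\gamma(\alpha,t),t)$, $\gamma(\alpha,0)=\alpha$, and $\gamma_\alpha=\partial\gamma/\partial\alpha$. Given the function $\eta(t)$, define $\mathcal J(\alpha,t)=1-\eta(t)u_0'(\alpha)$, $\mathcal K_i(\alpha,t)=\mathcal J(\alpha,t)^{-(i+1)}$ and $\bar{\mathcal K}_i(t)=\int_0^1\mathcal K_i(\alpha,t)\,d\alpha$ for $i=0,1$. *)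

(* Defs.v *)
From Stdlib Require Import Reals Lra Classical ClassicalEpsilon.
Open Scope R_scope.

(* Riemann integral of f over [a,b]; 0 if f is not Riemann integrable
   (the value is independent of the integrability proof, RiemannInt_P5). *)
Definition RInt (f : R -> R) (a b : R) : R :=
  match excluded_middle_informative (exists pr : Riemann_integrable f a b, True) with
  | left H => RiemannInt (proj1_sig (constructive_indefinite_description _ H))
  | right _ => 0
  end.

Definition cont2_on (S : R -> R -> Prop) (f : R -> R -> R) : Prop :=
  forall x t, S x t -> forall eps, 0 < eps -> exists d, 0 < d /\
    forall x' t', Rabs (x' - x) < d -> Rabs (t' - t) < d ->
      Rabs (f x' t' - f x t) < eps.

Definition is_dx_on (S : R -> R -> Prop) (f g : R -> R -> R) : Prop :=
  forall x t, S x t -> derivable_pt_lim (fun y => f y t) x (g x t).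

Definition is_dt_on (S : R -> R -> Prop) (f g : R -> R -> R) : Prop :=
  forall x t, S x t -> derivable_pt_lim (fun s => f x s) t (g x t).

(* C^infinity on (an open set) S: continuous, and both first-order partial
   derivatives exist on S and are again C^infinity on S. *)
CoInductive smooth_on (S : R -> R -> Prop) (f : R -> R -> R) : Prop :=
  | smooth_intro :
      cont2_on S f ->
      (exists fx, is_dx_on S f fx /\ smooth_on S fx) ->
      (exists ft, is_dt_on S f ft /\ smooth_on S ft) ->
      smooth_on S f.

Definition strip (delta T : R) : R -> R -> Prop := fun _ t => - delta < t < T.

Definition J (u0' eta : R -> R) (alpha t : R) : R := 1 - eta t * u0' alpha.

Definition K (i : nat) (u0' eta : R -> R) (alpha t : R) : R :=
  / (J u0' eta alpha t ^ (i + 1)).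

Definition Kbar (i : nat) (u0' eta : R -> R) (t : R) : R :=
  RInt (fun a => K i u0' eta a t) 0 1.

(* Main.v *)
Require Import Defs.
From Stdlib Require Import Reals Lra Lia Psatz Classical ZArith FunctionalExtensionality ClassicalEpsilon.
From Coquelicot Require Import Coquelicot.
Open Scope R_scope.


Lemma real_induction : forall a b (Q : R -> Prop), a <= b ->
  (forall s, a <= s <= b -> (forall r, a <= r < s -> Q r) ->
     exists d, 0 < d /\ forall r, s <= r < s + d -> r <= b -> Q r) ->
  forall r, a <= r <= b -> Q r.
Proof.
  intros a b Q Hab Hstep.
  set (E := fun s => a <= s <= b /\ forall r, a <= r < s -> Q r).
  assert (HE : exists x, E x) by (exists a; split; [lra| intros; lra]).
  assert (Hb : bound E) by (exists b; intros x [Hx _]; lra).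
  destruct (completeness E Hb HE) as [m [Hub Hlub]].
  assert (Ham : a <= m) by (apply Hub; split; [lra| intros; lra]).
  assert (Hmb : m <= b) by (apply Hlub; intros x [Hx _]; lra).
  assert (Hlt : forall r, a <= r < m -> Q r).
  { intros r Hr. destruct (classic (Q r)) as [|HnQ]; [auto|].
    exfalso. assert (m <= r); [|lra]. apply Hlub. intros x [Hx Hx2].
    destruct (Rle_or_lt x r); auto. exfalso; apply HnQ, Hx2; lra. }
  destruct (Hstep m (conj Ham Hmb) Hlt) as [d [Hd Hq]].
  assert (Hm : m = b).
  { destruct (Req_dec m b); auto. exfalso.
    assert (E (Rmin (m + d/2) b)).
    { split. split; [apply Rmin_case; lra| apply Rmin_r].
      intros r Hr. destruct (Rlt_or_le r m). apply Hlt; lra.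
      apply Hq; try lra. assert (Rmin (m + d/2) b <= m + d/2) by apply Rmin_l. lra.
      assert (Rmin (m + d/2) b <= b) by apply Rmin_r. lra. }
    apply Hub in H0. revert H0. apply Rmin_case; lra. }
  intros r Hr. destruct (Rlt_or_le r m). apply Hlt; lra. apply Hq; lra.
Qed.

Lemma mvt_int : forall f df a b, a < b ->
  (forall c, a < c < b -> derivable_pt_lim f c (df c)) ->
  (forall c, a <= c <= b -> continuity_pt f c) ->
  exists c, a < c < b /\ f b - f a = df c * (b - a).
Proof.
  intros f df a b Hab Hd Hc.
  assert (pr1 : forall c, a < c < b -> derivable_pt f c).
  { intros c Hc'. exists (df c). apply Hd; auto. }
  assert (pr2 : forall c, a < c < b -> derivable_pt id c).
  { intros c _. apply derivable_pt_id. }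
  destruct (MVT f id a b pr1 pr2 Hab Hc) as [c [P HP]].
  { intros; apply derivable_continuous_pt, derivable_pt_id. }
  exists c; split; auto.
  rewrite (derive_pt_eq_0 _ _ _ (pr1 c P) (Hd c P)) in HP.
  rewrite (derive_pt_eq_0 _ _ _ (pr2 c P) (derivable_pt_lim_id c)) in HP.
  unfold id in HP. lra.
Qed.

Lemma nonincr : forall f df a b, a <= b ->
  (forall c, a < c < b -> derivable_pt_lim f c (df c)) ->
  (forall c, a <= c <= b -> continuity_pt f c) ->
  (forall c, a < c < b -> df c <= 0) -> f b <= f a.
Proof.
  intros f df a b Hab Hd Hc Hn. destruct (Req_dec a b). subst; lra.
  destruct (mvt_int f df a b) as [c [Hc1 Hc2]]; try lra; auto.
  specialize (Hn c Hc1). nra.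
Qed.

Lemma const_der0 : forall f a b, a <= b ->
  (forall c, a < c < b -> derivable_pt_lim f c 0) ->
  (forall c, a <= c <= b -> continuity_pt f c) -> f b = f a.
Proof.
  intros f a b Hab Hd Hc. destruct (Req_dec a b). subst; lra.
  destruct (mvt_int f (fun _ => 0) a b) as [c [Hc1 Hc2]]; try lra; auto.
Qed.


Definition C2pt (f : R -> R -> R) x t := forall eps, 0 < eps -> exists d, 0 < d /\
  forall x' t', Rabs (x' - x) < d -> Rabs (t' - t) < d -> Rabs (f x' t' - f x t) < eps.

Lemma C2_2d : forall f x t, C2pt f x t -> continuity_2d_pt f x t.
Proof.
  intros f x t H eps. destruct (H eps (cond_pos eps)) as [d [Hd Hd2]].
  exists (mkposreal d Hd). simpl. intros; apply Hd2; auto.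
Qed.

Lemma cont_cont : forall f x, continuity_pt f x -> continuous f x.
Proof. intros f x H. apply continuity_pt_filterlim; auto. Qed.

Lemma cont_comp2 : forall f X Tm s0, C2pt f (X s0) (Tm s0) -> continuity_pt X s0 ->
  continuity_pt Tm s0 -> continuity_pt (fun s => f (X s) (Tm s)) s0.
Proof.
  intros f X Tm s0 Hf HX HT eps Heps.
  destruct (Hf eps Heps) as [d [Hd Hd2]].
  destruct (HX d Hd) as [d1 [Hd1 H1]]. destruct (HT d Hd) as [d2 [Hd2' H2]].
  exists (Rmin d1 d2). split. apply Rmin_case; auto.
  intros s [_ Hs]. simpl in *. unfold R_dist in *.
  apply Hd2. destruct (Req_dec s s0). subst. rewrite Rminus_diag, Rabs_R0; auto.
  apply H1. split. unfold D_x, no_cond; split; auto. eapply Rlt_le_trans; [apply Hs|apply Rmin_l].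
  destruct (Req_dec s s0). subst. rewrite Rminus_diag, Rabs_R0; auto.
  apply H2. split. unfold D_x, no_cond; split; auto. eapply Rlt_le_trans; [apply Hs|apply Rmin_r].
Qed.

Lemma prim_der : forall f lo hi t, (forall x, lo < x < hi -> continuity_pt f x) ->
  lo < 0 < hi -> lo < t < hi -> derivable_pt_lim (fun s => RInt f 0 s) t (f t).
Proof.
  intros f lo hi t Hc H0 Ht. apply is_derive_Reals.
  apply (is_derive_RInt f (fun s => RInt f 0 s) 0 t).
  - set (e := Rmin (t - lo) (hi - t)).
    assert (He : 0 < e) by (unfold e; apply Rmin_case; lra).
    exists (mkposreal e He). intros y Hy. refine (RInt_correct (V:=R_CompleteNormedModule) f 0 y _).
    apply (ex_RInt_continuous (V:=R_CompleteNormedModule)). intros z Hz. apply cont_cont, Hc.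
    unfold ball in Hy; simpl in Hy; unfold AbsRing_ball, abs, minus, plus, opp in Hy; simpl in Hy.
    assert (e <= t - lo) by apply Rmin_l. assert (e <= hi - t) by apply Rmin_r.
    apply Rabs_def2 in Hy. destruct Hz as [Hz1 Hz2].
    split; [eapply Rlt_le_trans; [|apply Hz1] | eapply Rle_lt_trans; [apply Hz2|]];
    [apply Rmin_case| apply Rmax_case]; lra.
  - apply cont_cont, Hc; auto.
Qed.

Lemma prim_cont : forall f lo hi t, (forall x, lo < x < hi -> continuity_pt f x) ->
  lo < 0 < hi -> lo < t < hi -> continuity_pt (fun s => RInt f 0 s) t.
Proof.
  intros. apply derivable_continuous_pt. exists (f t). eapply prim_der; eauto.
Qed.

Lemma prim_bound : forall f lo hi t M, (forall x, lo < x < hi -> continuity_pt f x) ->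
  lo < 0 -> 0 <= t < hi -> (forall s, 0 <= s <= t -> Rabs (f s) <= M) ->
  Rabs (RInt f 0 t) <= t * M.
Proof.
  intros f lo hi t M Hc H0 Ht HM.
  replace t with (t - 0) at 2 by ring.
  apply abs_RInt_le_const; try lra; auto.
  apply (ex_RInt_continuous (V:=R_CompleteNormedModule)). intros z Hz. apply cont_cont, Hc.
  revert Hz. apply Rmin_case; apply Rmax_case; lra.
Qed.

Lemma RInt0 : forall f a, RInt f a a = 0.
Proof. intros. exact (RInt_point (V:=R_CompleteNormedModule) a f). Qed.

Lemma exRInt_cont : forall f a b, (forall z, Rmin a b <= z <= Rmax a b -> continuity_pt f z) -> ex_RInt f a b.
Proof. intros. apply (ex_RInt_continuous (V:=R_CompleteNormedModule)). intros; apply cont_cont; auto. Qed.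

Lemma RInt_minus_R : forall f g a b, ex_RInt f a b -> ex_RInt g a b ->
  RInt (fun x => f x - g x) a b = RInt f a b - RInt g a b.
Proof. intros. exact (RInt_minus (V:=R_CompleteNormedModule) f g a b H H0). Qed.

Lemma RInt_lin2 : forall f g c1 c2 a b, ex_RInt f a b -> ex_RInt g a b ->
  RInt (fun x => c1 * f x + c2 * g x) a b = c1 * RInt f a b + c2 * RInt g a b.
Proof.
  intros f g c1 c2 a b Hf Hg.
  assert (E1 : RInt (fun x => c1 * f x) a b = c1 * RInt f a b)
    by exact (RInt_scal (V:=R_CompleteNormedModule) f a b c1 Hf).
  assert (E2 : RInt (fun x => c2 * g x) a b = c2 * RInt g a b)
    by exact (RInt_scal (V:=R_CompleteNormedModule) g a b c2 Hg).
  rewrite <- E1, <- E2.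
  exact (RInt_plus (V:=R_CompleteNormedModule) (fun x => c1 * f x) (fun x => c2 * g x) a b
    (ex_RInt_scal (V:=R_CompleteNormedModule) f a b c1 Hf) (ex_RInt_scal (V:=R_CompleteNormedModule) g a b c2 Hg)).
Qed.

Lemma RInt_scal_R : forall f c a b, ex_RInt f a b -> RInt (fun x => c * f x) a b = c * RInt f a b.
Proof. intros. exact (RInt_scal (V:=R_CompleteNormedModule) f a b c H). Qed.

Lemma RInt_ext_R : forall (f g : R -> R) a b, (forall x, Rmin a b < x < Rmax a b -> f x = g x) -> RInt f a b = RInt g a b.
Proof. intros. exact (RInt_ext (V:=R_CompleteNormedModule) f g a b H). Qed.

Lemma Rabs_def2b : forall x y, Rabs x <= y -> - y <= x <= y.
Proof. intros x y. unfold Rabs; destruct Rcase_abs; intros; lra. Qed.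

Lemma left_eq : forall f g s d0, 0 < d0 -> continuity_pt f s -> continuity_pt g s ->
  (forall r, s - d0 < r < s -> f r = g r) -> f s = g s.
Proof.
  intros f g s d0 Hd0 Hf Hg Heq. apply NNPP. intro n.
  set (e := Rabs (f s - g s) / 2).
  assert (He : 0 < e) by (unfold e; apply Rdiv_lt_0_compat; [apply Rabs_pos_lt; lra|lra]).
  destruct (Hf e He) as [d1 [Hd1 H1]]. destruct (Hg e He) as [d2 [Hd2 H2]].
  set (r := s - Rmin d0 (Rmin d1 d2) / 2).
  assert (Hm : 0 < Rmin d0 (Rmin d1 d2)) by (repeat apply Rmin_case; lra).
  assert (Rmin d0 (Rmin d1 d2) <= d0) by apply Rmin_l.
  assert (Rmin d0 (Rmin d1 d2) <= d1) by (eapply Rle_trans; [apply Rmin_r|apply Rmin_l]).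
  assert (Rmin d0 (Rmin d1 d2) <= d2) by (eapply Rle_trans; [apply Rmin_r|apply Rmin_r]).
  assert (Hr : Rabs (r - s) < Rmin d0 (Rmin d1 d2)).
  { unfold r. rewrite Rabs_left; lra. }
  assert (A1 : Rabs (f r - f s) < e).
  { apply H1. split. split; [exact I|intro HH; unfold r in HH; lra]. simpl; unfold R_dist; lra. }
  assert (A2 : Rabs (g r - g s) < e).
  { apply H2. split. split; [exact I|intro HH; unfold r in HH; lra]. simpl; unfold R_dist; lra. }
  rewrite Heq in A1 by (unfold r; lra).
  assert (Rabs (f s - g s) <= Rabs (g r - f s) + Rabs (g r - g s)).
  { replace (f s - g s) with (-(g r - f s) + (g r - g s)) by ring.
    eapply Rle_trans; [apply Rabs_triang|]. rewrite Rabs_Ropp; lra. }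
  unfold e in *. lra.
Qed.


Lemma mvt_between : forall g dg a b,
  (forall z, Rmin a b <= z <= Rmax a b -> derivable_pt_lim g z (dg z)) ->
  exists z, Rmin a b <= z <= Rmax a b /\ g b - g a = dg z * (b - a).
Proof.
  intros g dg a b Hd.
  destruct (Rtotal_order a b) as [Hab|[Hab|Hab]].
  - rewrite Rmin_left, Rmax_right in *; try lra.
    destruct (mvt_int g dg a b Hab) as [c [Hc1 Hc2]].
    intros; apply Hd; lra.
    intros c Hc; apply (derivable_continuous_pt g c); exists (dg c); apply Hd; lra.
    exists c; split; [lra|auto].
  - subst. exists b. split; [split; [apply Rmin_l| apply Rmax_l] | ring].
  - rewrite Rmin_right, Rmax_left in *; try lra.
    destruct (mvt_int g dg b a Hab) as [c [Hc1 Hc2]].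
    intros; apply Hd; lra.
    intros c Hc; apply (derivable_continuous_pt g c); exists (dg c); apply Hd; lra.
    exists c; split; [lra|lra].
Qed.

Lemma Rabs_between : forall z a b, Rmin a b <= z <= Rmax a b -> Rabs (z - a) <= Rabs (b - a).
Proof.
  intros z a b. apply Rmin_case_strong; apply Rmax_case_strong; intros;
  unfold Rabs; repeat destruct Rcase_abs; lra.
Qed.

Lemma diff_partials : forall f fx ft x0 t0 r, 0 < r ->
  (forall x t, Rabs (x - x0) < r -> Rabs (t - t0) < r -> derivable_pt_lim (fun y => f y t) x (fx x t)) ->
  (forall x t, Rabs (x - x0) < r -> Rabs (t - t0) < r -> derivable_pt_lim (fun s => f x s) t (ft x t)) ->
  C2pt fx x0 t0 -> C2pt ft x0 t0 ->
  differentiable_pt_lim f x0 t0 (fx x0 t0) (ft x0 t0).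
Proof.
  intros f fx ft x0 t0 r Hr Hfx Hft Cx Ct eps.
  assert (He : 0 < eps / 2) by (generalize (cond_pos eps); lra).
  destruct (Cx _ He) as [d1 [Hd1 H1]]. destruct (Ct _ He) as [d2 [Hd2 H2]].
  assert (Hd : 0 < Rmin r (Rmin d1 d2)) by (repeat apply Rmin_case; lra).
  exists (mkposreal _ Hd). simpl. intros u v Hu Hv.
  assert (Hm1 : Rmin r (Rmin d1 d2) <= r) by apply Rmin_l.
  assert (Hm2 : Rmin r (Rmin d1 d2) <= d1) by (eapply Rle_trans; [apply Rmin_r|apply Rmin_l]).
  assert (Hm3 : Rmin r (Rmin d1 d2) <= d2) by (eapply Rle_trans; [apply Rmin_r|apply Rmin_r]).
  destruct (mvt_between (fun y => f y v) (fun y => fx y v) x0 u) as [z [Hz Ez]].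
  { intros z Hz. apply Hfx. apply Rabs_between in Hz. lra. lra. }
  destruct (mvt_between (fun s => f x0 s) (fun s => ft x0 s) t0 v) as [w [Hw Ew]].
  { intros w Hw. apply Hft. rewrite Rminus_diag, Rabs_R0; lra. apply Rabs_between in Hw. lra. }
  simpl in Ez, Ew.
  apply Rabs_between in Hz. apply Rabs_between in Hw.
  assert (A1 : Rabs (fx z v - fx x0 t0) < eps / 2) by (apply H1; lra).
  assert (A2 : Rabs (ft x0 w - ft x0 t0) < eps / 2).
  { apply H2. rewrite Rminus_diag, Rabs_R0; lra. lra. }
  replace (f u v - f x0 t0 - (fx x0 t0 * (u - x0) + ft x0 t0 * (v - t0)))
    with ((fx z v - fx x0 t0) * (u - x0) + (ft x0 w - ft x0 t0) * (v - t0)) by lra.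
  eapply Rle_trans. apply Rabs_triang. rewrite !Rabs_mult.
  assert (Rabs (u - x0) <= Rmax (Rabs (u - x0)) (Rabs (v - t0))) by apply Rmax_l.
  assert (Rabs (v - t0) <= Rmax (Rabs (u - x0)) (Rabs (v - t0))) by apply Rmax_r.
  assert (0 <= Rabs (u - x0)) by apply Rabs_pos. assert (0 <= Rabs (v - t0)) by apply Rabs_pos.
  assert (0 <= Rabs (fx z v - fx x0 t0)) by apply Rabs_pos.
  assert (0 <= Rabs (ft x0 w - ft x0 t0)) by apply Rabs_pos.
  nra.
Qed.

Lemma box_bound : forall f a b c d, a <= b -> c <= d ->
  (forall x y, a <= x <= b -> c <= y <= d -> continuity_2d_pt f x y) ->
  exists M, forall x y, a <= x <= b -> c <= y <= d -> Rabs (f x y) <= M.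
Proof.
  intros f a b c d Hab Hcd Hc.
  destruct (uniform_continuity_2d f a b c d Hc (mkposreal 1 Rlt_0_1)) as [[de Hde] Hu]. simpl in Hu.
  assert (Hind : forall n : nat, forall x y, a <= x <= b -> c <= y <= d ->
    Rabs (x - a) <= INR n * de / 2 -> Rabs (y - c) <= INR n * de / 2 ->
    Rabs (f x y - f a c) <= INR n).
  { induction n; intros x y Hx Hy Hxa Hyc.
    - simpl in *. assert (x = a). { revert Hxa; unfold Rabs; destruct Rcase_abs; intros; lra. }
      assert (y = c). { revert Hyc; unfold Rabs; destruct Rcase_abs; intros; lra. } subst.
      rewrite Rminus_diag, Rabs_R0; lra.
    - rewrite S_INR in *. assert (0 <= INR n) by apply pos_INR.
      set (k := INR n / (INR n + 1)).
      assert (Hk0 : 0 <= k) by (unfold k; apply Rmult_le_pos; [lra|left; apply Rinv_0_lt_compat; lra]).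
      assert (Hk1 : k <= 1) by (unfold k; apply Rmult_le_reg_r with (INR n + 1); [lra|]; field_simplify; lra).
      assert (Hk2 : 1 - k = / (INR n + 1)) by (unfold k; field; lra).
      set (x' := a + (x - a) * k). set (y' := c + (y - c) * k).
      assert (Hx' : a <= x' <= b) by (unfold x'; split; nra).
      assert (Hy' : c <= y' <= d) by (unfold y'; split; nra).
      assert (E1 : Rabs (x' - a) <= INR n * de / 2).
      { unfold x'. replace (a + (x - a) * k - a) with ((x - a) * k) by ring.
        rewrite Rabs_mult, (Rabs_pos_eq k); auto.
        apply Rle_trans with ((INR n + 1) * de / 2 * k). apply Rmult_le_compat_r; auto.
        unfold k. right; field; lra. }
      assert (E2 : Rabs (y' - c) <= INR n * de / 2).
      { unfold y'. replace (c + (y - c) * k - c) with ((y - c) * k) by ring.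
        rewrite Rabs_mult, (Rabs_pos_eq k); auto.
        apply Rle_trans with ((INR n + 1) * de / 2 * k). apply Rmult_le_compat_r; auto.
        unfold k. right; field; lra. }
      specialize (IHn x' y' Hx' Hy' E1 E2).
      assert (E3 : Rabs (f x y - f x' y') < 1).
      { apply Hu; auto.
        - unfold x'. replace (x - (a + (x - a) * k)) with ((x - a) * (1 - k)) by ring.
          rewrite Rabs_mult, Hk2, (Rabs_pos_eq (/ (INR n + 1))); [|left; apply Rinv_0_lt_compat; lra].
          apply Rle_lt_trans with ((INR n + 1) * de / 2 * / (INR n + 1)).
          apply Rmult_le_compat_r; auto. left; apply Rinv_0_lt_compat; lra.
          field_simplify; lra.
        - unfold y'. replace (y - (c + (y - c) * k)) with ((y - c) * (1 - k)) by ring.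
          rewrite Rabs_mult, Hk2, (Rabs_pos_eq (/ (INR n + 1))); [|left; apply Rinv_0_lt_compat; lra].
          apply Rle_lt_trans with ((INR n + 1) * de / 2 * / (INR n + 1)).
          apply Rmult_le_compat_r; auto. left; apply Rinv_0_lt_compat; lra.
          field_simplify; lra. }
      replace (f x y - f a c) with ((f x y - f x' y') + (f x' y' - f a c)) by ring.
      eapply Rle_trans; [apply Rabs_triang|]. lra. }
  destruct (archimed (2 * (b - a + d - c) / de)) as [Har _].
  set (n := Z.to_nat (up (2 * (b - a + d - c) / de))).
  assert (Hn : 2 * (b - a + d - c) / de <= INR n).
  { unfold n. rewrite INR_IZR_INZ, Z2Nat.id. lra.
    apply le_IZR. assert (0 <= 2 * (b - a + d - c) / de).
    apply Rmult_le_pos; [lra|left; apply Rinv_0_lt_compat; lra]. lra. }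
  exists (Rabs (f a c) + INR n). intros x y Hx Hy.
  assert (Hn2 : b - a + d - c <= INR n * de / 2).
  { apply Rmult_le_compat_r with (r := de / 2) in Hn; [|lra].
    replace (2 * (b - a + d - c) / de * (de / 2)) with (b - a + d - c) in Hn by (field; lra). lra. }
  assert (Rabs (f x y - f a c) <= INR n).
  { apply Hind; auto; rewrite Rabs_pos_eq; lra. }
  replace (f x y) with (f a c + (f x y - f a c)) by ring.
  eapply Rle_trans; [apply Rabs_triang|]. lra.
Qed.


Lemma C2_transfer : forall delta T f g x t, -delta < t < T ->
  cont2_on (strip delta T) g -> (forall x t, strip delta T x t -> f x t = g x t) -> C2pt f x t.
Proof.
  intros delta T f g x t Ht Hg Heq eps Heps.
  destruct (Hg x t Ht eps Heps) as [d [Hd H]].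
  assert (Hd' : 0 < Rmin d (Rmin (t + delta) (T - t))) by (repeat apply Rmin_case; lra).
  exists (Rmin d (Rmin (t + delta) (T - t))). split; auto. intros x' t' Hx Ht'.
  assert (Rmin d (Rmin (t + delta) (T - t)) <= d) by apply Rmin_l.
  assert (Rmin d (Rmin (t + delta) (T - t)) <= t + delta) by (eapply Rle_trans; [apply Rmin_r|apply Rmin_l]).
  assert (Rmin d (Rmin (t + delta) (T - t)) <= T - t) by (eapply Rle_trans; [apply Rmin_r|apply Rmin_r]).
  rewrite !Heq. apply H; lra.
  unfold strip; auto.
  unfold strip. apply Rabs_def2 in Ht'. lra.
Qed.

Lemma smooth_regularity : forall delta T u ux uxx uxt,
  0 < delta ->
  smooth_on (strip delta T) u ->
  is_dx_on (strip delta T) u ux ->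
  is_dx_on (strip delta T) ux uxx ->
  is_dt_on (strip delta T) ux uxt ->
  forall x t, -delta < t < T ->
   C2pt u x t /\ C2pt ux x t /\ C2pt uxx x t /\ C2pt uxt x t.
Proof.
  intros delta T u ux uxx uxt Hdel Hs Hux Huxx Huxt.
  destruct Hs as [Hcu [fx [Hfx Hsfx]] _].
  destruct Hsfx as [Hcfx [fxx [Hfxx Hsfxx]] [fxt [Hfxt Hsfxt]]].
  destruct Hsfxx as [Hcfxx _ _]. destruct Hsfxt as [Hcfxt _ _].
  assert (E1 : forall x t, strip delta T x t -> ux x t = fx x t).
  { intros x t H. eapply uniqueness_limite; [apply Hux|apply Hfx]; auto. }
  assert (E2 : forall x t, strip delta T x t -> uxx x t = fxx x t).
  { intros x t H. eapply uniqueness_limite; [apply Huxx; auto|].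
    replace (fun y => ux y t) with (fun y => fx y t). apply Hfxx; auto.
    apply functional_extensionality; intro y; rewrite E1; auto. }
  assert (E3 : forall x t, strip delta T x t -> uxt x t = fxt x t).
  { intros x t H. eapply uniqueness_limite; [apply Huxt; auto|].
    apply is_derive_Reals. apply (is_derive_ext_loc (fun s => fx x s)).
    unfold strip in H.
    assert (He : 0 < Rmin (t + delta) (T - t)) by (apply Rmin_case; lra).
    exists (mkposreal _ He). intros s Hs. simpl in Hs.
    unfold ball in Hs; simpl in Hs; unfold AbsRing_ball, abs, minus, plus, opp in Hs; simpl in Hs.
    apply Rabs_def2 in Hs.
    assert (Rmin (t + delta) (T - t) <= t + delta) by apply Rmin_l.
    assert (Rmin (t + delta) (T - t) <= T - t) by apply Rmin_r.
    rewrite E1; auto. unfold strip; lra.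
    apply is_derive_Reals, Hfxt; auto. }
  intros x t Ht. split; [|split; [|split]].
  - apply (C2_transfer delta T u u); auto.
  - apply (C2_transfer delta T ux fx); auto.
  - apply (C2_transfer delta T uxx fxx); auto.
  - apply (C2_transfer delta T uxt fxt); auto.
Qed.


Lemma Rmax0_lip : forall a b, Rabs (Rmax 0 a - Rmax 0 b) <= Rabs (a - b).
Proof. intros a b. unfold Rmax; repeat destruct Rle_dec; unfold Rabs; repeat destruct Rcase_abs; lra. Qed.

Lemma Rmax0_cont : forall s, continuity_pt (Rmax 0) s.
Proof.
  intros s eps Heps. exists eps. split; auto. intros x [_ Hx]. simpl in *. unfold R_dist in *.
  eapply Rle_lt_trans; [apply Rmax0_lip|auto].
Qed.

Lemma cont_ext_loc : forall f g x d, 0 < d -> (forall y, Rabs (y - x) < d -> f y = g y) ->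
  continuity_pt f x -> continuity_pt g x.
Proof.
  intros f g x d Hd Heq Hf eps Heps. destruct (Hf eps Heps) as [d1 [Hd1 H1]].
  exists (Rmin d d1). split. apply Rmin_case; lra.
  intros y [Hy1 Hy2]. simpl in *. unfold R_dist in *.
  assert (Rmin d d1 <= d) by apply Rmin_l. assert (Rmin d d1 <= d1) by apply Rmin_r.
  rewrite <- !Heq. apply H1. split; auto. lra. rewrite Rminus_diag, Rabs_R0; auto. lra.
Qed.

Lemma der_ext_loc : forall f g x d l, 0 < d -> (forall y, Rabs (y - x) < d -> f y = g y) ->
  derivable_pt_lim f x l -> derivable_pt_lim g x l.
Proof.
  intros f g x d l Hd Heq Hf. apply is_derive_Reals. apply (is_derive_ext_loc f).
  exists (mkposreal d Hd). intros y Hy. apply Heq.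
  unfold ball in Hy; simpl in Hy; unfold AbsRing_ball, abs, minus, plus, opp in Hy; simpl in Hy. auto.
  apply is_derive_Reals; auto.
Qed.

Lemma der_eq : forall f x l1 l2, derivable_pt_lim f x l1 -> l1 = l2 -> derivable_pt_lim f x l2.
Proof. intros; subst; auto. Qed.

Section Flow.
Variables (T delta : R) (u ux uxx uxt : R -> R -> R).
Hypothesis HT : 0 < T.
Hypothesis Hdelta : 0 < delta.
Hypothesis Reg : forall x t, -delta < t < T ->
   C2pt u x t /\ C2pt ux x t /\ C2pt uxx x t /\ C2pt uxt x t.
Hypothesis Hux : is_dx_on (strip delta T) u ux.
Hypothesis Huxx : is_dx_on (strip delta T) ux uxx.
Hypothesis Huxt : is_dt_on (strip delta T) ux uxt.

Definition sol (y : R -> R) := (forall t, 0 < t < T -> derivable_pt_lim y t (u (y t) t)) /\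
  (forall eps, 0 < eps -> exists d, 0 < d /\ forall s, 0 <= s < d -> Rabs (y s - y 0) < eps).

Definition ext (y : R -> R) s := y (Rmax 0 s).

Lemma ext_cont : forall y, sol y -> forall s, s < T -> continuity_pt (ext y) s.
Proof.
  intros y [Hd Hr] s Hs. destruct (Rle_or_lt s 0) as [Hs0|Hs0].
  - intros eps Heps. destruct (Hr eps Heps) as [d [Hd0 H]]. exists d. split; auto.
    intros x [_ Hx]. simpl in *. unfold R_dist, ext in *.
    rewrite (Rmax_left 0 s) by lra. unfold Rmax. destruct Rle_dec. apply H.
    apply Rabs_def2 in Hx. lra. rewrite Rminus_diag, Rabs_R0; auto.
  - apply (cont_ext_loc y _ s s); auto.
    intros z Hz. apply Rabs_def2 in Hz. unfold ext. rewrite Rmax_right; lra.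
    apply derivable_continuous_pt. exists (u (y s) s). apply Hd; lra.
Qed.

Lemma ext_der : forall y, sol y -> forall c, 0 < c < T -> derivable_pt_lim (ext y) c (u (y c) c).
Proof.
  intros y [Hd _] c Hc. apply (der_ext_loc y _ c c); try lra.
  intros z Hz. apply Rabs_def2 in Hz. unfold ext. rewrite Rmax_right; lra. apply Hd; auto.
Qed.

Definition Qd x y s := if Req_EM_T x y then ux y s else (u x s - u y s) / (x - y).

Lemma Qd_spec : forall x y s, Qd x y s * (x - y) = u x s - u y s.
Proof.
  intros x y s. unfold Qd. destruct Req_EM_T. subst; ring. field. lra.
Qed.

Lemma Qd_mvt : forall x y s, -delta < s < T -> exists z, Rmin y x <= z <= Rmax y x /\ Qd x y s = ux z s.
Proof.
  intros x y s Hs. unfold Qd. destruct Req_EM_T.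
  - subst. exists y. split; [split; [apply Rmin_l|apply Rmax_l]|auto].
  - destruct (mvt_between (fun z => u z s) (fun z => ux z s) y x) as [z [Hz Ez]].
    intros; apply Hux; unfold strip; lra.
    exists z. split; auto. simpl in Ez. rewrite Ez. field. lra.
Qed.

Lemma q_cont : forall X Y s0, s0 < T -> continuity_pt X s0 -> continuity_pt Y s0 ->
  continuity_pt (fun s => Qd (X s) (Y s) (Rmax 0 s)) s0.
Proof.
  intros X Y s0 Hs0 HX HY.
  assert (HR : 0 <= Rmax 0 s0 < T) by (split; [apply Rmax_l| apply Rmax_case; lra]).
  destruct (Req_dec (X s0) (Y s0)) as [E|E].
  - intros eps Heps.
    destruct (Reg (Y s0) (Rmax 0 s0)) as [_ [Cux _]]. lra.
    destruct (Cux eps Heps) as [d1 [Hd1 H1]].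
    destruct (HX d1 Hd1) as [dX [HdX HX1]]. destruct (HY d1 Hd1) as [dY [HdY HY1]].
    set (d := Rmin (Rmin dX dY) (Rmin d1 (T - s0))).
    assert (Hd : 0 < d) by (unfold d; repeat apply Rmin_case; lra).
    exists d. split; auto. intros s [_ Hs]. simpl in *. unfold R_dist in *.
    assert (d <= dX) by (unfold d; eapply Rle_trans; [apply Rmin_l|apply Rmin_l]).
    assert (d <= dY) by (unfold d; eapply Rle_trans; [apply Rmin_l|apply Rmin_r]).
    assert (d <= d1) by (unfold d; eapply Rle_trans; [apply Rmin_r|apply Rmin_l]).
    assert (d <= T - s0) by (unfold d; eapply Rle_trans; [apply Rmin_r|apply Rmin_r]).
    assert (EX : Rabs (X s - X s0) < d1).
    { destruct (Req_dec s s0). subst; rewrite Rminus_diag, Rabs_R0; lra.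
      apply HX1; split; [split; auto; exact I|lra]. }
    assert (EY : Rabs (Y s - Y s0) < d1).
    { destruct (Req_dec s s0). subst; rewrite Rminus_diag, Rabs_R0; lra.
      apply HY1; split; [split; auto; exact I|lra]. }
    assert (HRs : -delta < Rmax 0 s < T).
    { split. apply Rlt_le_trans with 0; [lra|apply Rmax_l]. apply Rmax_case; apply Rabs_def2 in Hs; lra. }
    destruct (Qd_mvt (X s) (Y s) (Rmax 0 s) HRs) as [z [Hz Ez]].
    assert (E0 : Qd (X s0) (Y s0) (Rmax 0 s0) = ux (Y s0) (Rmax 0 s0)).
    { unfold Qd. destruct Req_EM_T; [auto|contradiction]. }
    rewrite Ez, E0. apply H1.
    revert Hz EX EY. rewrite E. apply Rmin_case_strong; apply Rmax_case_strong; intros;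
    unfold Rabs in *; repeat destruct Rcase_abs; lra.
    eapply Rle_lt_trans; [apply Rmax0_lip|lra].
  - assert (HXY : continuity_pt (fun s => X s - Y s) s0) by (apply continuity_pt_minus; auto).
    destruct (HXY (Rabs (X s0 - Y s0))) as [d [Hd Hd2]].
    { apply Rabs_pos_lt. lra. }
    apply (cont_ext_loc (fun s => (u (X s) (Rmax 0 s) - u (Y s) (Rmax 0 s)) / (X s - Y s)) _ s0 d Hd).
    + intros s Hs. unfold Qd. destruct Req_EM_T as [e|]; auto. exfalso.
      destruct (Req_dec s s0). subst. lra.
      assert (Rabs (X s - Y s - (X s0 - Y s0)) < Rabs (X s0 - Y s0)).
      { apply Hd2. split; [split; auto; exact I|auto]. }
      rewrite e, Rminus_diag in H0. rewrite Rminus_0_l, Rabs_Ropp in H0. lra.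
    + apply continuity_pt_div; auto. apply continuity_pt_minus.
      * apply cont_comp2; auto. apply Reg; lra. apply Rmax0_cont.
      * apply cont_comp2; auto. apply Reg; lra. apply Rmax0_cont.
      * lra.
Qed.

Definition qf (y z : R -> R) s := Qd (ext y s) (ext z s) (Rmax 0 s).

Lemma qf_cont : forall y z, sol y -> sol z -> forall s, s < T -> continuity_pt (qf y z) s.
Proof. intros. apply q_cont; auto; apply ext_cont; auto. Qed.

Lemma LC : forall y z, sol y -> sol z -> forall t, 0 <= t < T ->
  y t - z t = (y 0 - z 0) * exp (RInt (qf y z) 0 t).
Proof.
  intros y z Hy Hz t Ht.
  set (P := fun s => (ext y s - ext z s) * exp (- RInt (qf y z) 0 s)).
  assert (HC : forall s, -1 < s < T -> continuity_pt (qf y z) s) by (intros; apply qf_cont; auto; lra).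
  assert (HP : P t = P 0).
  { apply const_der0. lra.
    - intros c Hc.
      apply der_eq with ((u (y c) c - u (z c) c) * exp (- RInt (qf y z) 0 c) +
                         (ext y c - ext z c) * (exp (- RInt (qf y z) 0 c) * (- qf y z c))).
      unfold P. apply (derivable_pt_lim_mult (fun s => ext y s - ext z s) (fun s => exp (- RInt (qf y z) 0 s))).
      apply (derivable_pt_lim_minus (ext y) (ext z)); apply ext_der; auto; lra.
      apply (derivable_pt_lim_comp (fun s => - RInt (qf y z) 0 s) exp).
      apply (derivable_pt_lim_opp (fun s => RInt (qf y z) 0 s)). apply (prim_der _ (-1) T); auto; lra.
      apply derivable_pt_lim_exp.
      unfold qf, ext. rewrite Rmax_right by lra.
      rewrite <- (Qd_spec (y c) (z c) c). ring.
    - intros c Hc. unfold P. apply (continuity_pt_mult (fun s => ext y s - ext z s) (fun s => exp (- RInt (qf y z) 0 s))).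
      apply (continuity_pt_minus (ext y) (ext z)); apply ext_cont; auto; lra.
      apply (continuity_pt_comp (fun s => - RInt (qf y z) 0 s) exp).
      apply (continuity_pt_opp (fun s => RInt (qf y z) 0 s)). apply (prim_cont _ (-1) T); auto; lra.
      apply derivable_continuous_pt, derivable_pt_exp. }
  assert (E0 : RInt (qf y z) 0 0 = 0) by (apply RInt0).
  unfold P, ext in HP. rewrite E0 in HP. rewrite !Rmax_right in HP by lra.
  replace (Rmax 0 0) with 0 in HP by (rewrite Rmax_left; lra).
  rewrite Ropp_0, exp_0, Rmult_1_r in HP.
  rewrite <- HP. rewrite Rmult_assoc, <- exp_plus. replace (- RInt (qf y z) 0 t + RInt (qf y z) 0 t) with 0 by ring.
  rewrite exp_0; ring.
Qed.

End Flow.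


Section Flow2.
Variables (T delta : R) (u ux uxx uxt : R -> R -> R).
Hypothesis HT : 0 < T.
Hypothesis Hdelta : 0 < delta.
Hypothesis Reg : forall x t, -delta < t < T ->
   C2pt u x t /\ C2pt ux x t /\ C2pt uxx x t /\ C2pt uxt x t.
Hypothesis Hux : is_dx_on (strip delta T) u ux.
Variable gamma : R -> R -> R.
Hypothesis Hsol : forall a, sol T u (gamma a).
Hypothesis Hg0 : forall a, gamma a 0 = a.

Notation qf := (qf u ux).
Let LC' := LC T delta u ux uxx uxt HT Hdelta Reg Hux.
Let qf_cont' := qf_cont T delta u ux uxx uxt HT Hdelta Reg Hux.
Let Qd_mvt' := Qd_mvt T delta u ux Hux.
Notation Qd := (Qd u ux).

Lemma ext_pos : forall (y : R -> R) s, 0 <= s -> ext y s = y s.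
Proof. intros; unfold ext; rewrite Rmax_right; auto. Qed.

Lemma qf_pos : forall y z s, 0 <= s -> qf y z s = Qd (y s) (z s) s.
Proof. intros; unfold qf; rewrite !ext_pos, Rmax_right; auto. Qed.

Lemma close : forall a t m M L b, 0 <= t < T ->
  (forall s, 0 <= s <= t -> m <= gamma a s <= M) ->
  (forall x s, m - 1 <= x <= M + 1 -> 0 <= s <= t -> Rabs (ux x s) <= L) ->
  Rabs (b - a) * exp (L * t) < 1/2 ->
  forall s, 0 <= s <= t -> Rabs (gamma b s - gamma a s) < 1/2.
Proof.
  intros a t m M L b Ht Hm HL Hb.
  assert (HL0 : 0 <= L).
  { specialize (HL (gamma a 0) 0). eapply Rle_trans; [apply Rabs_pos|apply HL].
    specialize (Hm 0). lra. lra. }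
  assert (Hexp : 1 <= exp (L * t)).
  { rewrite <- exp_0. destruct (Req_dec (L*t) 0). rewrite H; lra. left; apply exp_increasing. nra. }
  assert (Hba : Rabs (b - a) < 1/2).
  { assert (0 <= Rabs (b - a)) by apply Rabs_pos. nra. }
  set (De := fun r => ext (gamma b) r - ext (gamma a) r).
  assert (HDe : forall r, r < T -> continuity_pt De r).
  { intros r Hr. apply (continuity_pt_minus (ext (gamma b)) (ext (gamma a))); apply (ext_cont T u); auto. }
  apply (real_induction 0 t); [lra|].
  intros s Hs IH.
  destruct (HDe s (ltac:(lra)) (1/4) (ltac:(lra))) as [d1 [Hd1 H1]].
  assert (Hs1 : Rabs (De s) < 3/4).
  { destruct (Req_dec s 0).
    - subst. unfold De. rewrite !ext_pos, !Hg0 by lra. lra.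
    - set (r := s - Rmin d1 s / 2).
      assert (Rmin d1 s <= d1) by apply Rmin_l. assert (Rmin d1 s <= s) by apply Rmin_r.
      assert (0 < Rmin d1 s) by (apply Rmin_case; lra).
      assert (Hr : 0 <= r < s) by (unfold r; lra).
      specialize (IH r Hr).
      assert (Hdr : Rabs (De r - De s) < 1/4).
      { apply H1. split. split; [exact I|intro HH; unfold r in HH; lra]. simpl; unfold R_dist.
        unfold r. rewrite Rabs_left; lra. }
      unfold De in *. rewrite !ext_pos in * by lra.
      revert IH Hdr. unfold Rabs; repeat destruct Rcase_abs; lra. }
  exists d1. split; auto. intros r Hr Hrt.
  assert (Hsmall : forall r', 0 <= r' <= r -> Rabs (gamma b r' - gamma a r') < 1).
  { intros r' Hr'. destruct (Rlt_or_le r' s).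
    - specialize (IH r' (ltac:(lra))). lra.
    - assert (Hdr : Rabs (De r' - De s) < 1/4).
      { destruct (Req_dec r' s). subst. rewrite Rminus_diag, Rabs_R0. lra.
        apply H1. split. split; [exact I|intro HH; lra]. simpl; unfold R_dist. rewrite Rabs_right; lra. }
      unfold De in *. rewrite !ext_pos in * by lra.
      revert Hs1 Hdr. unfold Rabs; repeat destruct Rcase_abs; lra. }
  assert (Hq : forall r', 0 <= r' <= r -> Rabs (qf (gamma b) (gamma a) r') <= L).
  { intros r' Hr'. rewrite qf_pos by lra.
    destruct (Qd_mvt' (gamma b r') (gamma a r') r') as [z [Hz Ez]]. lra.
    rewrite Ez. apply HL; [|lra].
    specialize (Hsmall r' Hr'). specialize (Hm r' (ltac:(lra))).
    revert Hz Hsmall. apply Rmin_case_strong; apply Rmax_case_strong; intros;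
    unfold Rabs in *; repeat destruct Rcase_abs; lra. }
  rewrite (LC' (gamma b) (gamma a) (Hsol b) (Hsol a) r) by lra.
  rewrite !Hg0, Rabs_mult, (Rabs_pos_eq (exp _)) by (left; apply exp_pos).
  assert (HI : Rabs (RInt (qf (gamma b) (gamma a)) 0 r) <= r * L).
  { apply (prim_bound _ (-1) T); try lra; auto.
    intros; apply qf_cont'; auto; lra. }
  assert (exp (RInt (qf (gamma b) (gamma a)) 0 r) <= exp (L * t)).
  { destruct (Req_dec (RInt (qf (gamma b) (gamma a)) 0 r) (L * t)) as [E|E]. rewrite E; lra.
    left. apply exp_increasing. 
    assert (r * L <= L * t) by nra. revert HI E; unfold Rabs; destruct Rcase_abs; intros; lra. }
  assert (0 <= Rabs (b - a)) by apply Rabs_pos. nra.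
Qed.

Lemma close2 : forall a t m M L b, 0 <= t < T ->
  (forall s, 0 <= s <= t -> m <= gamma a s <= M) ->
  (forall x s, m - 1 <= x <= M + 1 -> 0 <= s <= t -> Rabs (ux x s) <= L) ->
  Rabs (b - a) * exp (L * t) < 1/2 ->
  forall s, 0 <= s <= t -> Rabs (gamma b s - gamma a s) <= Rabs (b - a) * exp (L * t).
Proof.
  intros a t m M L b Ht Hm HL Hb s Hs.
  assert (HL0 : 0 <= L).
  { specialize (HL (gamma a 0) 0). eapply Rle_trans; [apply Rabs_pos|apply HL].
    specialize (Hm 0). lra. lra. }
  assert (Hcl := close a t m M L b Ht Hm HL Hb).
  assert (Hq : forall r', 0 <= r' <= s -> Rabs (qf (gamma b) (gamma a) r') <= L).
  { intros r' Hr'. rewrite qf_pos by lra.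
    destruct (Qd_mvt' (gamma b r') (gamma a r') r') as [z [Hz Ez]]. lra.
    rewrite Ez. apply HL; [|lra].
    specialize (Hcl r' (ltac:(lra))). specialize (Hm r' (ltac:(lra))).
    revert Hz Hcl. apply Rmin_case_strong; apply Rmax_case_strong; intros;
    unfold Rabs in *; repeat destruct Rcase_abs; lra. }
  rewrite (LC' (gamma b) (gamma a) (Hsol b) (Hsol a) s) by lra.
  rewrite !Hg0, Rabs_mult, (Rabs_pos_eq (exp _)) by (left; apply exp_pos).
  assert (HI : Rabs (RInt (qf (gamma b) (gamma a)) 0 s) <= s * L).
  { apply (prim_bound _ (-1) T); try lra; auto.
    intros; apply qf_cont'; auto; lra. }
  assert (exp (RInt (qf (gamma b) (gamma a)) 0 s) <= exp (L * t)).
  { destruct (Req_dec (RInt (qf (gamma b) (gamma a)) 0 s) (L * t)) as [E|E]. rewrite E; lra.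
    left. apply exp_increasing.
    assert (s * L <= L * t) by nra. revert HI E; unfold Rabs; destruct Rcase_abs; intros; lra. }
  apply Rmult_le_compat_l; auto. apply Rabs_pos.
Qed.

Lemma flow_deriv : forall a t, 0 <= t < T ->
  derivable_pt_lim (fun b => gamma b t) a (exp (RInt (qf (gamma a) (gamma a)) 0 t)).
Proof.
  intros a t Ht.
  assert (Hc : forall c, 0 <= c <= t -> continuity_pt (ext (gamma a)) c)
    by (intros; apply (ext_cont T u); auto; lra).
  destruct (continuity_ab_maj (ext (gamma a)) 0 t) as [cM [HcM HcM']]; [lra|auto|].
  destruct (continuity_ab_min (ext (gamma a)) 0 t) as [cm [Hcm Hcm']]; [lra|auto|].
  set (M := ext (gamma a) cM). set (m := ext (gamma a) cm).
  assert (Hm : forall s, 0 <= s <= t -> m <= gamma a s <= M).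
  { intros s Hs. rewrite <- (ext_pos (gamma a) s) by lra. split; [apply Hcm|apply HcM]; auto. }
  assert (HmM : m <= M) by (specialize (Hm 0); lra).
  assert (Hbox : forall x y, m - 1 <= x <= M + 1 -> 0 <= y <= t -> continuity_2d_pt ux x y).
  { intros x y _ Hy. apply C2_2d. apply Reg; lra. }
  destruct (box_bound ux (m - 1) (M + 1) 0 t) as [L HL]; try lra; auto.
  intros eps Heps.
  set (I0 := RInt (qf (gamma a) (gamma a)) 0 t).
  destruct (derivable_continuous_pt exp I0 (derivable_pt_exp I0) eps Heps) as [eta [Heta Heta2]].
  assert (Heps' : 0 < eta / (t + 1)) by (apply Rdiv_lt_0_compat; lra).
  destruct (uniform_continuity_2d ux (m - 1) (M + 1) 0 t Hbox (mkposreal _ Heps')) as [[du Hdu] Hu].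
  simpl in Hu.
  set (E := exp (L * t)). assert (HE : 0 < E) by apply exp_pos.
  assert (Hdh : 0 < Rmin (1 / (2 * E)) (du / E)).
  { apply Rmin_case; apply Rdiv_lt_0_compat; lra. }
  exists (mkposreal _ Hdh). intros h Hh0 Hh. simpl in Hh.
  assert (Hh1 : Rabs h < 1 / (2 * E)) by (eapply Rlt_le_trans; [apply Hh|apply Rmin_l]).
  assert (Hh2 : Rabs h < du / E) by (eapply Rlt_le_trans; [apply Hh|apply Rmin_r]).
  assert (HbE : Rabs (a + h - a) * E < 1/2).
  { replace (a + h - a) with h by ring.
    apply Rmult_lt_compat_r with (r := E) in Hh1; auto.
    replace (1 / (2 * E) * E) with (1/2) in Hh1 by (field; lra). auto. }
  assert (HbE2 : Rabs (a + h - a) * E < du).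
  { replace (a + h - a) with h by ring.
    apply Rmult_lt_compat_r with (r := E) in Hh2; auto.
    replace (du / E * E) with du in Hh2 by (field; lra). auto. }
  assert (Hcl := close a t m M L (a + h) Ht Hm HL HbE).
  assert (Hcl2 := close2 a t m M L (a + h) Ht Hm HL HbE).
  set (Ib := RInt (qf (gamma (a + h)) (gamma a)) 0 t).
  assert (Hdiff : gamma (a + h) t - gamma a t = h * exp Ib).
  { unfold Ib. rewrite (LC' (gamma (a + h)) (gamma a) (Hsol _) (Hsol _) t) by lra.
    rewrite !Hg0. f_equal; ring. }
  replace ((gamma (a + h) t - gamma a t) / h - exp I0) with (exp Ib - exp I0)
    by (rewrite Hdiff; field; auto).
  assert (HI : Rabs (Ib - I0) <= t * (eta / (t + 1))).
  { unfold Ib, I0. rewrite <- RInt_minus_R.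
    apply (prim_bound _ (-1) T); try lra.
    - intros x Hx. apply (continuity_pt_minus (qf (gamma (a + h)) (gamma a)) (qf (gamma a) (gamma a)));
      apply qf_cont'; auto; lra.
    - intros s Hs. rewrite !qf_pos by lra.
      destruct (Qd_mvt' (gamma (a + h) s) (gamma a s) s) as [z [Hz Ez]]. lra.
      rewrite Ez. unfold Qd at 1. destruct Req_EM_T as [_|nn]; [|exfalso; apply nn; auto].
      left. apply Hu; try lra.
      + specialize (Hm s Hs). lra.
      + specialize (Hcl s Hs). specialize (Hm s Hs).
        revert Hz Hcl. apply Rmin_case_strong; apply Rmax_case_strong; intros;
        unfold Rabs in *; repeat destruct Rcase_abs; lra.
      + specialize (Hcl2 s Hs). apply Rabs_between in Hz. fold E in Hcl2. lra.
      + rewrite Rminus_diag, Rabs_R0; lra.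
    - apply exRInt_cont. intros; apply qf_cont'; auto; revert H; apply Rmax_case; lra.
    - apply exRInt_cont. intros; apply qf_cont'; auto; revert H; apply Rmax_case; lra. }
  assert (Hlt : t * (eta / (t + 1)) < eta).
  { apply Rmult_lt_reg_r with (t + 1). lra. field_simplify; lra. }
  destruct (Req_dec Ib I0) as [E0|E0]. rewrite E0, Rminus_diag, Rabs_R0; auto.
  apply Heta2. split. split; [exact I|auto]. simpl. unfold R_dist. lra.
Qed.

End Flow2.


Lemma EU : forall (D D1 I : R -> R) t1 C, 0 <= t1 ->
  (forall s, 0 <= s <= t1 -> derivable_pt_lim D s (D1 s)) ->
  (forall s, 0 <= s <= t1 -> continuity_pt D1 s) ->
  (forall s, 0 < s < t1 -> derivable_pt_lim D1 s (- I s * D s)) ->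
  (forall s, 0 < s < t1 -> Rabs (I s) <= C) -> D 0 = 0 -> D1 0 = 0 -> D t1 = 0.
Proof.
  intros D D1 I t1 C Ht1 HD HD1c HD1 HI H0 H10.
  set (k := 1 + Rabs C).
  set (G := fun s => exp (- k * s) * (D s * D s + D1 s * D1 s)).
  assert (HG : G t1 <= G 0).
  { apply (nonincr G (fun s => exp (- k * s) * (- k) * (D s * D s + D1 s * D1 s) +
        exp (- k * s) * (D1 s * D s + D s * D1 s + ((- I s * D s) * D1 s + D1 s * (- I s * D s)))) 0 t1); auto.
    - intros c Hc. unfold G.
      apply (derivable_pt_lim_mult (fun s => exp (- k * s)) (fun s => D s * D s + D1 s * D1 s)).
      + apply (derivable_pt_lim_comp (fun s => - k * s) exp).
        apply der_eq with (- k * 1). apply (derivable_pt_lim_scal id (-k)). apply derivable_pt_lim_id. ring.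
        apply derivable_pt_lim_exp.
      + apply (derivable_pt_lim_plus (fun s => D s * D s) (fun s => D1 s * D1 s)).
        apply (derivable_pt_lim_mult D D); apply HD; lra.
        apply (derivable_pt_lim_mult D1 D1); apply HD1; lra.
    - intros c Hc. unfold G.
      apply (continuity_pt_mult (fun s => exp (- k * s)) (fun s => D s * D s + D1 s * D1 s)).
      apply (continuity_pt_comp (fun s => - k * s) exp).
      apply derivable_continuous_pt. exists (-k * 1). apply (derivable_pt_lim_scal id (-k)). apply derivable_pt_lim_id.
      apply derivable_continuous_pt, derivable_pt_exp.
      assert (continuity_pt D c). { apply derivable_continuous_pt. exists (D1 c). apply HD; auto. }
      apply (continuity_pt_plus (fun s => D s * D s) (fun s => D1 s * D1 s));
      [apply (continuity_pt_mult D D)|apply (continuity_pt_mult D1 D1)]; auto.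
    - intros c Hc. specialize (HI c Hc).
      assert (He : 0 < exp (- k * c)) by apply exp_pos.
      assert (Hk : Rabs (1 - I c) <= k).
      { unfold k. eapply Rle_trans. unfold Rminus; apply Rabs_triang. rewrite Rabs_Ropp, Rabs_R1.
        assert (Rabs (I c) <= Rabs C). eapply Rle_trans; [apply HI|apply RRle_abs]. lra. }
      assert (Hx : 2 * (D c * D1 c) * (1 - I c) <= k * (D c * D c + D1 c * D1 c)).
      { eapply Rle_trans. apply RRle_abs. rewrite !Rabs_mult, (Rabs_pos_eq 2) by lra.
        assert (2 * Rabs (D c) * Rabs (D1 c) <= D c * D c + D1 c * D1 c).
        { assert (0 <= (Rabs (D c) - Rabs (D1 c))^2) by apply pow2_ge_0.
          assert (Rabs (D c) * Rabs (D c) = D c * D c) by (rewrite <- Rabs_mult; apply Rabs_pos_eq; nra).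
          assert (Rabs (D1 c) * Rabs (D1 c) = D1 c * D1 c) by (rewrite <- Rabs_mult; apply Rabs_pos_eq; nra).
          nra. }
        assert (0 <= Rabs (D c)) by apply Rabs_pos. assert (0 <= Rabs (D1 c)) by apply Rabs_pos.
        assert (0 <= Rabs (1 - I c)) by apply Rabs_pos.
        assert (0 <= D c * D c + D1 c * D1 c) by nra. nra. }
      assert (0 <= D c * D c + D1 c * D1 c) by nra.
      nra. }
  unfold G in HG. rewrite H0, H10, Rmult_0_r, exp_0 in HG.
  assert (He : 0 < exp (- k * t1)) by apply exp_pos.
  assert (D t1 * D t1 + D1 t1 * D1 t1 <= 0).
  { apply Rmult_le_reg_l with (exp (- k * t1)); auto. lra. }
  nra.
Qed.


Section Ric.
Variables (T delta : R) (u ux uxx uxt : R -> R -> R).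
Hypothesis HT : 0 < T.
Hypothesis Hdelta : 0 < delta.
Hypothesis Reg : forall x t, -delta < t < T ->
   C2pt u x t /\ C2pt ux x t /\ C2pt uxx x t /\ C2pt uxt x t.
Hypothesis Hux : is_dx_on (strip delta T) u ux.
Hypothesis Huxx : is_dx_on (strip delta T) ux uxx.
Hypothesis Huxt : is_dt_on (strip delta T) ux uxt.
Variable gamma : R -> R -> R.
Hypothesis Hsol : forall a, sol T u (gamma a).
Hypothesis Hg0 : forall a, gamma a 0 = a.
Variable I : R -> R.
Hypothesis Hpde : forall a t, 0 <= a <= 1 -> 0 < t < T ->
  uxt (gamma a t) t + u (gamma a t) t * uxx (gamma a t) t - (ux (gamma a t) t)^2 = I t.

Let qf_cont' := qf_cont T delta u ux uxx uxt HT Hdelta Reg Hux.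

Definition qd a := qf u ux (gamma a) (gamma a).
Definition h a s := exp (- RInt (qd a) 0 s).
Definition h1 a s := - qd a s * h a s.

Lemma qd_cont : forall a s, s < T -> continuity_pt (qd a) s.
Proof. intros; apply qf_cont'; auto. Qed.

Lemma qd_pos : forall a s, 0 <= s -> qd a s = ux (gamma a s) s.
Proof.
  intros a s Hs. unfold qd. rewrite (qf_pos u ux) by auto. unfold Qd.
  destruct Req_EM_T as [_|n]; [auto|exfalso; auto].
Qed.

Lemma h_der : forall a s, -1 < s < T -> derivable_pt_lim (h a) s (h1 a s).
Proof.
  intros a s Hs. unfold h, h1.
  apply der_eq with (exp (- RInt (qd a) 0 s) * (- qd a s)).
  apply (derivable_pt_lim_comp (fun s => - RInt (qd a) 0 s) exp).
  apply (derivable_pt_lim_opp (fun s => RInt (qd a) 0 s)).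
  apply (prim_der _ (-1) T); auto; try lra. intros; apply qd_cont; lra.
  apply derivable_pt_lim_exp. unfold h; ring.
Qed.

Lemma h_cont : forall a s, -1 < s < T -> continuity_pt (h a) s.
Proof. intros. apply derivable_continuous_pt. exists (h1 a s). apply h_der; auto. Qed.


Lemma h1_cont' : forall a s, -1 < s < T -> continuity_pt (h1 a) s.
Proof.
  intros. unfold h1. apply (continuity_pt_mult (fun s => - qd a s) (h a)).
  apply (continuity_pt_opp (qd a)). apply qd_cont; lra. apply h_cont; auto.
Qed.

Lemma h_pos : forall a s, 0 < h a s.
Proof. intros; apply exp_pos. Qed.

Lemma h_0 : forall a, h a 0 = 1.
Proof. intros. unfold h. rewrite RInt0, Ropp_0, exp_0; auto. Qed.

Lemma h1_0 : forall a, h1 a 0 = - ux a 0.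
Proof. intros. unfold h1. rewrite h_0, qd_pos, Hg0 by lra. ring. Qed.

Lemma qd_der : forall a s, 0 < s < T ->
  derivable_pt_lim (qd a) s (uxx (gamma a s) s * u (gamma a s) s + uxt (gamma a s) s).
Proof.
  intros a s Hs.
  apply (der_ext_loc (fun t => ux (gamma a t) t) _ s s); [lra| |].
  { intros y Hy. rewrite qd_pos; auto. apply Rabs_def2 in Hy. lra. }
  apply der_eq with (uxx (gamma a s) s * u (gamma a s) s + uxt (gamma a s) s * 1).
  2: ring.
  apply (derivable_pt_lim_comp_2d ux (gamma a) (fun t => t)).
  - set (r := Rmin (s + delta) (T - s)).
    assert (Hr : 0 < r) by (unfold r; apply Rmin_case; lra).
    assert (r <= s + delta) by apply Rmin_l. assert (r <= T - s) by apply Rmin_r.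
    apply (diff_partials ux uxx uxt (gamma a s) s r Hr).
    + intros x t _ Ht. apply Huxx. unfold strip. apply Rabs_def2 in Ht. lra.
    + intros x t _ Ht. apply Huxt. unfold strip. apply Rabs_def2 in Ht. lra.
    + apply Reg; lra.
    + apply Reg; lra.
  - destruct (Hsol a) as [Hd _]. apply Hd; auto.
  - apply derivable_pt_lim_id.
Qed.

Lemma h1_der : forall a s, 0 <= a <= 1 -> 0 < s < T -> derivable_pt_lim (h1 a) s (- I s * h a s).
Proof.
  intros a s Ha Hs. unfold h1.
  apply der_eq with (- (uxx (gamma a s) s * u (gamma a s) s + uxt (gamma a s) s) * h a s +
     (- qd a s) * h1 a s).
  apply (derivable_pt_lim_mult (fun s => - qd a s) (h a)).
  apply (derivable_pt_lim_opp (qd a)). apply qd_der; auto. apply h_der; lra.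
  rewrite <- (Hpde a s Ha Hs). unfold h1. rewrite qd_pos by lra. ring.
Qed.

Lemma I_bound : forall t1, 0 <= t1 < T -> exists C, forall s, 0 < s < t1 -> Rabs (I s) <= C.
Proof.
  intros t1 Ht1.
  set (Fc := fun s => uxt (ext (gamma 0) s) (Rmax 0 s) + u (ext (gamma 0) s) (Rmax 0 s) * uxx (ext (gamma 0) s) (Rmax 0 s)
     - (ux (ext (gamma 0) s) (Rmax 0 s))^2).
  assert (HR : forall s, s < T -> -delta < Rmax 0 s < T).
  { intros s Hs. split. apply Rlt_le_trans with 0; [lra|apply Rmax_l]. apply Rmax_case; lra. }
  assert (Hc : forall s, 0 <= s <= t1 -> continuity_pt (fun s => Rabs (Fc s)) s).
  { intros s Hs. apply (continuity_pt_comp Fc Rabs); [|apply Rcontinuity_abs].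
    assert (He : continuity_pt (ext (gamma 0)) s) by (apply (ext_cont T u); auto; lra).
    assert (Hm := Rmax0_cont s).
    assert (HA : forall f, (forall x t, -delta < t < T -> C2pt f x t) ->
       continuity_pt (fun s => f (ext (gamma 0) s) (Rmax 0 s)) s).
    { intros f Hf. apply cont_comp2; auto. apply Hf. apply HR; lra. }
    unfold Fc.
    apply (continuity_pt_minus (fun s => uxt (ext (gamma 0) s) (Rmax 0 s) + u (ext (gamma 0) s) (Rmax 0 s) * uxx (ext (gamma 0) s) (Rmax 0 s))
       (fun s => (ux (ext (gamma 0) s) (Rmax 0 s))^2)).
    apply (continuity_pt_plus (fun s => uxt (ext (gamma 0) s) (Rmax 0 s)) (fun s => u (ext (gamma 0) s) (Rmax 0 s) * uxx (ext (gamma 0) s) (Rmax 0 s))).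
    apply HA; intros; apply Reg; auto.
    apply (continuity_pt_mult (fun s => u (ext (gamma 0) s) (Rmax 0 s)) (fun s => uxx (ext (gamma 0) s) (Rmax 0 s))).
    apply HA; intros; apply Reg; auto.
    apply HA; intros; apply Reg; auto.
    apply (continuity_pt_comp (fun s => ux (ext (gamma 0) s) (Rmax 0 s)) (fun x => x ^ 2)).
    apply HA; intros; apply Reg; auto.
    apply derivable_continuous_pt, derivable_pt_pow. }
  destruct (continuity_ab_maj _ 0 t1 (proj1 Ht1) Hc) as [c [Hc1 _]].
  exists (Rabs (Fc c)). intros s Hs.
  rewrite <- (Hpde 0 s) by lra.
  specialize (Hc1 s (ltac:(lra))). unfold Fc in Hc1 at 1. unfold ext in Hc1. rewrite Rmax_right in Hc1 by lra. auto.
Qed.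

Lemma comb_zero : forall a b c k1 k2, 0 <= a <= 1 -> 0 <= b <= 1 -> 0 <= c <= 1 ->
  1 = k1 + k2 -> ux a 0 = k1 * ux b 0 + k2 * ux c 0 ->
  forall t, 0 <= t < T -> h a t = k1 * h b t + k2 * h c t.
Proof.
  intros a b c k1 k2 Ha Hb Hc Hk Hp t Ht.
  destruct (I_bound t Ht) as [C HC].
  assert (HD := EU (fun s => h a s - (k1 * h b s + k2 * h c s)) (fun s => h1 a s - (k1 * h1 b s + k2 * h1 c s))
     I t C (proj1 Ht)).
  simpl in HD. enough (h a t - (k1 * h b t + k2 * h c t) = 0) by lra.
  apply HD; clear HD.
  - intros s Hs. apply (derivable_pt_lim_minus (h a) (fun s => k1 * h b s + k2 * h c s)). apply h_der; lra.
    apply (derivable_pt_lim_plus (fun s => k1 * h b s) (fun s => k2 * h c s));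
    apply derivable_pt_lim_scal; apply h_der; lra.
  - intros s Hs. apply (continuity_pt_minus (h1 a) (fun s => k1 * h1 b s + k2 * h1 c s)). apply h1_cont'; lra.
    apply (continuity_pt_plus (fun s => k1 * h1 b s) (fun s => k2 * h1 c s));
    apply continuity_pt_scal; apply h1_cont'; lra.
  - intros s Hs. apply der_eq with (- I s * h a s - (k1 * (- I s * h b s) + k2 * (- I s * h c s))).
    apply (derivable_pt_lim_minus (h1 a) (fun s => k1 * h1 b s + k2 * h1 c s)). apply h1_der; lra.
    apply (derivable_pt_lim_plus (fun s => k1 * h1 b s) (fun s => k2 * h1 c s));
    apply derivable_pt_lim_scal; apply h1_der; lra. ring.
  - auto.
  - rewrite !h_0. lra.
  - rewrite !h1_0. lra.
Qed.

Lemma wronsk : forall b c, 0 <= b <= 1 -> 0 <= c <= 1 -> forall t, 0 <= t < T ->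
  h b t * h1 c t - h1 b t * h c t = ux b 0 - ux c 0.
Proof.
  intros b c Hb Hc t Ht.
  set (W := fun s => h b s * h1 c s - h1 b s * h c s).
  assert (W t = W 0).
  { apply const_der0. lra.
    - intros s Hs. apply der_eq with ((h1 b s * h1 c s + h b s * (- I s * h c s)) - ((- I s * h b s) * h c s + h1 b s * h1 c s)).
      apply (derivable_pt_lim_minus (fun s => h b s * h1 c s) (fun s => h1 b s * h c s)).
      apply (derivable_pt_lim_mult (h b) (h1 c)). apply h_der; lra. apply h1_der; lra.
      apply (derivable_pt_lim_mult (h1 b) (h c)). apply h1_der; lra. apply h_der; lra. ring.
    - intros s Hs. apply (continuity_pt_minus (fun s => h b s * h1 c s) (fun s => h1 b s * h c s)).
      apply (continuity_pt_mult (h b) (h1 c)). apply h_cont; lra. apply h1_cont'; lra.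
      apply (continuity_pt_mult (h1 b) (h c)). apply h1_cont'; lra. apply h_cont; lra. }
  unfold W in H. rewrite H, !h_0, !h1_0. ring.
Qed.


Lemma structure : forall a0, 0 <= a0 <= 1 -> ux a0 0 = 0 ->
  exists (psi : R -> R), psi 0 = 0 /\ (forall t, -1 < t < T -> continuity_pt psi t) /\ (forall a t, 0 <= a <= 1 -> 0 <= t < T -> h a t = h a0 t * (1 - psi t * ux a 0)) /\ ((forall t, 0 <= t < T -> derivable_pt_lim psi t (/ (h a0 t)^2)) \/
   ((forall a, 0 <= a <= 1 -> ux a 0 = 0) /\ forall t, derivable_pt_lim psi t 1)).
Proof.
  intros a0 Ha0 Hp0.
  destruct (classic (exists a1, 0 <= a1 <= 1 /\ ux a1 0 <> 0)) as [[a1 [Ha1 Hp1]]|Hno].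
  - set (psi := fun s => / ux a1 0 * (1 - h a1 s / h a0 s)).
    assert (Hd : forall t, -1 < t < T -> derivable_pt_lim psi t
       (/ ux a1 0 * (0 - (h1 a1 t * h a0 t - h a1 t * h1 a0 t) / (h a0 t)^2))).
    { intros t Ht. unfold psi.
      apply (derivable_pt_lim_scal (fun s => 1 - h a1 s / h a0 s)).
      apply (derivable_pt_lim_minus (fun _ => 1) (fun s => h a1 s / h a0 s)).
      apply derivable_pt_lim_const.
      apply der_eq with ((h1 a1 t * h a0 t - h1 a0 t * h a1 t) / (h a0 t)²).
      apply (derivable_pt_lim_div (h a1) (h a0)). apply h_der; auto. apply h_der; auto.
      apply Rgt_not_eq, h_pos. unfold Rsqr. simpl. field. apply Rgt_not_eq, h_pos. }
    exists psi. split; [|split; [|split]].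
    + unfold psi. rewrite !h_0. field; auto.
    + intros t Ht. apply derivable_continuous_pt. eexists; apply Hd; auto.
    + intros a t Ha Ht.
      rewrite (comb_zero a a0 a1 (1 - ux a 0 / ux a1 0) (ux a 0 / ux a1 0)); auto.
      unfold psi. field. split; auto. apply Rgt_not_eq, h_pos. ring.
      rewrite Hp0. field; auto.
    + left. intros t Ht. apply der_eq with (/ ux a1 0 * (0 - (h1 a1 t * h a0 t - h a1 t * h1 a0 t) / (h a0 t)^2)).
      apply Hd; lra.
      assert (HW := wronsk a0 a1 Ha0 Ha1 t Ht). rewrite Hp0 in HW.
      replace (h1 a1 t * h a0 t - h a1 t * h1 a0 t) with (- ux a1 0) by lra.
      field. split; auto. apply Rgt_not_eq, h_pos.
  - assert (Hz : forall a, 0 <= a <= 1 -> ux a 0 = 0).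
    { intros a Ha. apply NNPP. intro n. apply Hno. exists a; auto. }
    exists (fun s => s). split; [auto|split; [|split]].
    + intros t _. apply continuity_pt_id.
    + intros a t Ha Ht. rewrite (comb_zero a a0 a0 1 0); auto. rewrite Hz by auto. ring. ring.
      rewrite !Hz by auto. ring.
    + right. split; auto. intros; apply derivable_pt_lim_id.
Qed.


Let flow_deriv' := flow_deriv T delta u ux uxx uxt HT Hdelta Reg Hux gamma Hsol Hg0.

Lemma ux_cont0 : forall a, continuity_pt (fun b => ux b 0) a.
Proof.
  intros a. apply (cont_comp2 ux (fun b => b) (fun _ => 0) a).
  apply Reg; lra. apply continuity_pt_id. apply continuity_pt_const. intros ? ?; auto.
Qed.

Lemma gamma_der : forall a t, 0 <= t < T -> derivable_pt_lim (fun b => gamma b t) a (/ h a t).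
Proof.
  intros a t Ht. apply der_eq with (exp (RInt (qf u ux (gamma a) (gamma a)) 0 t)).
  apply flow_deriv'; auto. unfold h, qd. rewrite exp_Ropp, Rinv_inv. auto.
Qed.

Lemma rat_cont : forall (Rf : R -> R) x, continuity_pt Rf (ux x 0) -> continuity_pt (fun a => Rf (ux a 0)) x.
Proof. intros. apply (continuity_pt_comp (fun a => ux a 0) Rf); auto. apply ux_cont0. Qed.

Hypothesis Hends : forall t, 0 <= t < T -> gamma 1 t - gamma 0 t = 1 /\ u (gamma 1 t) t = u (gamma 0 t) t.
Variables (a0 : R) (psi : R -> R).
Hypothesis Ha0 : 0 <= a0 <= 1.
Hypothesis Hpsi0 : psi 0 = 0.
Hypothesis Hid : forall a t, 0 <= a <= 1 -> 0 <= t < T -> h a t = h a0 t * (1 - psi t * ux a 0).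
Hypothesis Hpsid : (forall t, 0 <= t < T -> derivable_pt_lim psi t (/ (h a0 t)^2)) \/
   ((forall a, 0 <= a <= 1 -> ux a 0 = 0) /\ forall t, derivable_pt_lim psi t 1).

Lemma J_pos : forall a t, 0 <= a <= 1 -> 0 <= t < T -> 0 < 1 - psi t * ux a 0.
Proof.
  intros a t Ha Ht. assert (H1 := h_pos a t). assert (H2 := h_pos a0 t).
  rewrite Hid in H1 by auto. apply (Rmult_lt_reg_l (h a0 t)); auto. lra.
Qed.

Lemma inv_cont : forall c k x, c * (1 - k * ux x 0) <> 0 ->
  continuity_pt (fun a => / (c * (1 - k * ux a 0))) x.
Proof.
  intros c k x Hx. apply (rat_cont (fun v => / (c * (1 - k * v)))).
  apply (continuity_pt_inv (fun v => c * (1 - k * v))); auto.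
  apply (continuity_pt_scal (fun v => 1 - k * v)).
  apply (continuity_pt_minus (fun _ => 1) (fun v => k * v)). apply continuity_pt_const; intros ? ?; auto.
  apply (continuity_pt_scal id). apply continuity_pt_id.
Qed.

Lemma int1 : forall t, 0 <= t < T -> RInt (fun a => / (1 - psi t * ux a 0)) 0 1 = h a0 t.
Proof.
  intros t Ht.
  assert (Hi : is_RInt (fun a => / (h a0 t * (1 - psi t * ux a 0))) 0 1 (gamma 1 t - gamma 0 t)).
  { refine (is_RInt_derive (V:=R_CompleteNormedModule) (fun b => gamma b t) _ 0 1 _ _).
    - intros x Hx. rewrite Rmin_left, Rmax_right in Hx by lra.
      apply is_derive_Reals. rewrite <- Hid by auto. apply gamma_der; auto.
    - intros x Hx. rewrite Rmin_left, Rmax_right in Hx by lra. apply cont_cont, inv_cont.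
      rewrite <- Hid by auto. apply Rgt_not_eq, h_pos. }
  destruct (Hends t Ht) as [E1 _]. rewrite E1 in Hi.
  apply (is_RInt_unique (V:=R_CompleteNormedModule)) in Hi.
  assert (Hex : ex_RInt (fun a => / (1 - psi t * ux a 0)) 0 1).
  { apply exRInt_cont. intros z Hz. rewrite Rmin_left, Rmax_right in Hz by lra.
    replace (fun a => / (1 - psi t * ux a 0)) with (fun a => / (1 * (1 - psi t * ux a 0)))
      by (apply functional_extensionality; intro; rewrite Rmult_1_l; auto).
    apply inv_cont. rewrite Rmult_1_l. apply Rgt_not_eq, J_pos; auto. }
  replace (fun a => / (h a0 t * (1 - psi t * ux a 0))) with (fun a => / h a0 t * / (1 - psi t * ux a 0)) in Hi.
  rewrite RInt_scal_R in Hi; auto.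
  assert (H0 := h_pos a0 t).
  apply (Rmult_eq_reg_l (/ h a0 t)). rewrite Hi. field. lra.
  apply Rinv_neq_0_compat; lra.
  apply functional_extensionality; intro a. rewrite Rinv_mult. auto.
Qed.

Lemma RInt_one : RInt (fun _ => 1) 0 1 = 1.
Proof.
  rewrite (RInt_const (V:=R_CompleteNormedModule) 0 1 1).
  unfold scal; simpl. unfold mult; simpl. ring.
Qed.

Lemma psi_der : forall t, 0 <= t < T -> derivable_pt_lim psi t (/ (h a0 t)^2).
Proof.
  intros t Ht. destruct Hpsid as [H|[Hz Hd]]; auto.
  assert (E : h a0 t = 1).
  { rewrite <- int1 by auto. transitivity (RInt (fun _ : R => 1) 0 1); [|apply RInt_one]. apply RInt_ext_R.
    intros x Hx. rewrite Rmin_left, Rmax_right in Hx by lra. rewrite Hz by lra.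
    rewrite Rmult_0_r, Rminus_0_r, Rinv_1. auto. }
  rewrite E. apply der_eq with 1; auto. simpl; field.
Qed.

Lemma psi_pos : forall t, 0 < t < T -> 0 < psi t.
Proof.
  intros t Ht.
  destruct (mvt_int psi (fun s => / (h a0 s)^2) 0 t) as [c [Hc Ec]]. lra.
  intros c Hc; apply psi_der; lra.
  intros c Hc; apply derivable_continuous_pt; eexists; apply psi_der; lra.
  rewrite Hpsi0 in Ec. assert (0 < / (h a0 c)^2).
  { apply Rinv_0_lt_compat. apply pow_lt, h_pos. }
  nra.
Qed.

Lemma h1_formula : forall a t, 0 <= a <= 1 -> 0 < t < T ->
  h1 a t = h1 a0 t * (1 - psi t * ux a 0) + h a0 t * (0 - (/ (h a0 t)^2) * ux a 0).
Proof.
  intros a t Ha Ht. eapply uniqueness_limite. apply h_der; lra.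
  apply (der_ext_loc (fun s => h a0 s * (1 - psi s * ux a 0)) _ t (Rmin t (T - t))).
  apply Rmin_case; lra.
  intros y Hy. assert (Rmin t (T - t) <= t) by apply Rmin_l. assert (Rmin t (T - t) <= T - t) by apply Rmin_r.
  apply Rabs_def2 in Hy. rewrite (Hid a y); auto. lra.
  apply (derivable_pt_lim_mult (h a0) (fun s => 1 - psi s * ux a 0)). apply h_der; lra.
  apply (derivable_pt_lim_minus (fun _ => 1) (fun s => psi s * ux a 0)). apply derivable_pt_lim_const.
  apply der_eq with (/ (h a0 t)^2 * ux a 0 + psi t * 0). apply (derivable_pt_lim_mult psi (fun _ => ux a 0)).
  apply psi_der; lra. apply derivable_pt_lim_const. ring.
Qed.

Lemma int2 : forall t, 0 < t < T ->
  h1 a0 t = / (h a0 t)^2 * (RInt (fun a => / ((1 - psi t * ux a 0)^2)) 0 1 - h a0 t) / psi t.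
Proof.
  intros t Ht.
  set (c1 := h1 a0 t). set (c3 := h a0 t). set (ps := psi t).
  assert (Hc3 : 0 < c3) by apply h_pos. assert (Hps : 0 < ps) by (apply psi_pos; auto).
  set (df2 := fun x => - (c1 * (1 - ps * ux x 0) + c3 * (0 - / c3 ^ 2 * ux x 0)) / (c3 * (1 - ps * ux x 0)) ^ 2).
  assert (Hi : is_RInt df2 0 1 (u (gamma 1 t) t - u (gamma 0 t) t)).
  { refine (is_RInt_derive (V:=R_CompleteNormedModule) (fun b => u (gamma b t) t) _ 0 1 _ _).
    - intros x Hx. rewrite Rmin_left, Rmax_right in Hx by lra.
      apply is_derive_Reals.
      apply der_eq with (ux (gamma x t) t * / h x t).
      apply (derivable_pt_lim_comp (fun b => gamma b t) (fun y => u y t)). apply gamma_der; lra.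
      apply Hux. unfold strip; lra.
      rewrite <- qd_pos by lra.
      assert (Eq : qd x t = - h1 x t / h x t). { unfold h1. field. apply Rgt_not_eq, h_pos. }
      rewrite Eq, (h1_formula x t), (Hid x t) by (auto; lra). unfold df2. fold c1 c3 ps. field.
      split. apply Rgt_not_eq; auto. apply Rgt_not_eq. apply J_pos; lra.
    - intros x Hx. rewrite Rmin_left, Rmax_right in Hx by lra. apply cont_cont.
      unfold df2. apply (rat_cont (fun v => - (c1 * (1 - ps * v) + c3 * (0 - / c3 ^ 2 * v)) / (c3 * (1 - ps * v)) ^ 2)).
      apply (continuity_pt_div (fun v => - (c1 * (1 - ps * v) + c3 * (0 - / c3 ^ 2 * v))) (fun v => (c3 * (1 - ps * v)) ^ 2)).
      + apply derivable_continuous_pt. apply derivable_pt_opp. apply derivable_pt_plus.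
        apply derivable_pt_scal. apply derivable_pt_minus. apply derivable_pt_const. apply derivable_pt_scal, derivable_pt_id.
        apply derivable_pt_scal. apply derivable_pt_minus. apply derivable_pt_const. apply derivable_pt_scal, derivable_pt_id.
      + apply derivable_continuous_pt. apply (derivable_pt_comp (fun v => c3 * (1 - ps * v)) (fun w => w ^ 2)).
        apply derivable_pt_scal. apply derivable_pt_minus. apply derivable_pt_const. apply derivable_pt_scal, derivable_pt_id.
        apply derivable_pt_pow.
      + apply pow_nonzero. apply Rmult_integral_contrapositive; split. lra. apply Rgt_not_eq, J_pos; lra. }
  destruct (Hends t (ltac:(lra))) as [_ E2]. rewrite E2, Rminus_diag in Hi.
  apply (is_RInt_unique (V:=R_CompleteNormedModule)) in Hi.
  set (A := - c1 / c3 ^ 2 - / c3 ^ 3 / ps). set (B := / c3 ^ 3 / ps).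
  assert (Hex1 : ex_RInt (fun a => / (1 - psi t * ux a 0)) 0 1).
  { apply exRInt_cont. intros z Hz. rewrite Rmin_left, Rmax_right in Hz by lra.
    apply (rat_cont (fun v => / (1 - psi t * v))).
    apply (continuity_pt_inv (fun v => 1 - psi t * v)).
    apply derivable_continuous_pt. apply derivable_pt_minus. apply derivable_pt_const. apply derivable_pt_scal, derivable_pt_id.
    apply Rgt_not_eq, J_pos; lra. }
  assert (Hex2 : ex_RInt (fun a => / ((1 - psi t * ux a 0) ^ 2)) 0 1).
  { apply exRInt_cont. intros z Hz. rewrite Rmin_left, Rmax_right in Hz by lra.
    apply (rat_cont (fun v => / ((1 - psi t * v) ^ 2))).
    apply (continuity_pt_inv (fun v => (1 - psi t * v) ^ 2)).
    apply derivable_continuous_pt. apply (derivable_pt_comp (fun v => 1 - psi t * v) (fun w => w ^ 2)).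
    apply derivable_pt_minus. apply derivable_pt_const. apply derivable_pt_scal, derivable_pt_id.
    apply derivable_pt_pow.
    apply pow_nonzero, Rgt_not_eq, J_pos; lra. }
  assert (E3 : RInt df2 0 1 = A * RInt (fun a => / (1 - psi t * ux a 0)) 0 1 + B * RInt (fun a => / ((1 - psi t * ux a 0) ^ 2)) 0 1).
  { rewrite <- RInt_lin2 by auto. apply RInt_ext_R. intros x Hx. rewrite Rmin_left, Rmax_right in Hx by lra.
    unfold df2, A, B. fold ps. assert (0 < 1 - ps * ux x 0) by (apply J_pos; lra). field. lra. }
  rewrite int1 in E3 by lra. fold c3 in E3. rewrite Hi in E3.
  unfold A, B in E3. fold c1 c3 ps. fold ps in E3.
  set (K := RInt (fun a : R => / (1 - ps * ux a 0) ^ 2) 0 1) in *.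
  replace c1 with (c1 + c3 * ((- c1 / c3 ^ 2 - / c3 ^ 3 / ps) * c3 + / c3 ^ 3 / ps * K)) by (rewrite <- E3; ring).
  field. lra.
Qed.

Lemma final_w : forall a t, 0 <= a <= 1 -> 0 < t < T ->
  ux (gamma a t) t = / (psi t * (h a0 t)^2) *
    (/ (1 - psi t * ux a 0) - RInt (fun b => / ((1 - psi t * ux b 0)^2)) 0 1 / h a0 t).
Proof.
  intros a t Ha Ht. rewrite <- qd_pos by lra.
  assert (Eq : qd a t = - h1 a t / h a t). { unfold h1. field. apply Rgt_not_eq, h_pos. }
  rewrite Eq, (h1_formula a t), (Hid a t) by (auto; lra). rewrite int2 by auto.
  assert (0 < h a0 t) by apply h_pos. assert (0 < psi t) by (apply psi_pos; auto).
  assert (0 < 1 - psi t * ux a 0) by (apply J_pos; lra).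
  field. lra.
Qed.

Lemma Defs_RInt_eq : forall f, ex_RInt f 0 1 -> Defs.RInt f 0 1 = RInt f 0 1.
Proof.
  intros f Hf. unfold Defs.RInt. destruct excluded_middle_informative as [e|n].
  - symmetry. apply RInt_Reals.
  - exfalso. apply n. exists (ex_RInt_Reals_0 f 0 1 Hf). auto.
Qed.

Definition KB e := RInt (fun a => / (1 - e * ux a 0)) 0 1.
Definition KB1 e := RInt (fun a => / ((1 - e * ux a 0) ^ 2)) 0 1.

Lemma Jinv_cont : forall e x, 1 - e * ux x 0 <> 0 -> continuity_pt (fun a => / (1 - e * ux a 0)) x.
Proof.
  intros e x Hx. apply (rat_cont (fun v => / (1 - e * v))).
  apply (continuity_pt_inv (fun v => 1 - e * v)); auto.
  apply derivable_continuous_pt. apply derivable_pt_minus. apply derivable_pt_const. apply derivable_pt_scal, derivable_pt_id.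
Qed.

Lemma Jinv2_cont : forall e x, 1 - e * ux x 0 <> 0 -> continuity_pt (fun a => / ((1 - e * ux a 0) ^ 2)) x.
Proof.
  intros e x Hx. apply (rat_cont (fun v => / ((1 - e * v) ^ 2))).
  apply (continuity_pt_inv (fun v => (1 - e * v) ^ 2)). 
  apply derivable_continuous_pt. apply (derivable_pt_comp (fun v => 1 - e * v) (fun w => w ^ 2)).
  apply derivable_pt_minus. apply derivable_pt_const. apply derivable_pt_scal, derivable_pt_id.
  apply derivable_pt_pow. apply pow_nonzero; auto.
Qed.

Lemma Kbar0_eq : forall (et : R -> R) t, (forall a, 0 <= a <= 1 -> 0 < 1 - et t * ux a 0) ->
  Kbar 0 (fun a => ux a 0) et t = KB (et t).
Proof.
  intros et t Hp. unfold Kbar, KB, Defs.K, Defs.J.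
  rewrite Defs_RInt_eq. apply RInt_ext_R. intros x Hx. simpl. rewrite Rmult_1_r. auto.
  apply exRInt_cont. intros z Hz. rewrite Rmin_left, Rmax_right in Hz by lra. simpl.
  replace (fun a => / ((1 - et t * ux a 0) * 1)) with (fun a => / (1 - et t * ux a 0))
    by (apply functional_extensionality; intro; rewrite Rmult_1_r; auto).
  apply Jinv_cont. apply Rgt_not_eq, Hp; auto.
Qed.

Lemma Kbar1_eq : forall (et : R -> R) t, (forall a, 0 <= a <= 1 -> 0 < 1 - et t * ux a 0) ->
  Kbar 1 (fun a => ux a 0) et t = KB1 (et t).
Proof.
  intros et t Hp. unfold Kbar, KB1, Defs.K, Defs.J.
  rewrite Defs_RInt_eq. apply RInt_ext_R. intros x Hx. simpl. auto.
  apply exRInt_cont. intros z Hz. rewrite Rmin_left, Rmax_right in Hz by lra. simpl.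
  apply (Jinv2_cont (et t) z). apply Rgt_not_eq, Hp; auto.
Qed.

Definition Fk e := / (KB e ^ 2).

Lemma Lip : forall e0 m, 0 < m -> (forall a, 0 <= a <= 1 -> m <= 1 - e0 * ux a 0) ->
  exists r L, 0 < r /\ forall e1 e2, Rabs (e1 - e0) <= r -> Rabs (e2 - e0) <= r ->
   (forall a, 0 <= a <= 1 -> m / 2 <= 1 - e1 * ux a 0) /\
   Rabs (Fk e1 - Fk e2) <= L * Rabs (e1 - e2).
Proof.
  intros e0 m Hm Hm2.
  destruct (continuity_ab_maj (fun a => Rabs (ux a 0)) 0 1) as [aP [HP _]]. lra.
  { intros c _. apply (continuity_pt_comp (fun a => ux a 0) Rabs). apply ux_cont0. apply Rcontinuity_abs. }
  set (P := Rabs (ux aP 0)). assert (HP0 : 0 <= P) by apply Rabs_pos.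
  set (r := m / (2 * (P + 1))).
  assert (Hr : 0 < r) by (unfold r; apply Rdiv_lt_0_compat; lra).
  assert (HrP : r * P <= m / 2).
  { unfold r. apply Rmult_le_reg_r with (2 * (P + 1)). lra.
    replace (m / (2 * (P + 1)) * P * (2 * (P + 1))) with (m * P) by (field; lra). nra. }
  assert (HJ : forall e, Rabs (e - e0) <= r -> forall a, 0 <= a <= 1 -> m / 2 <= 1 - e * ux a 0).
  { intros e He a Ha. specialize (Hm2 a Ha). specialize (HP a Ha).
    assert (Rabs ((e - e0) * ux a 0) <= r * P).
    { rewrite Rabs_mult. apply Rmult_le_compat; auto; apply Rabs_pos. }
    apply Rabs_def2b in H. destruct H. nra. }
  set (c := / (1 + (Rabs e0 + r) * P)).
  assert (Hc : 0 < c) by (unfold c; apply Rinv_0_lt_compat; assert (0 <= Rabs e0) by apply Rabs_pos; nra).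
  assert (HK : forall e, Rabs (e - e0) <= r -> c <= KB e <= 2 / m).
  { intros e He.
    assert (Hex : ex_RInt (fun a => / (1 - e * ux a 0)) 0 1).
    { apply exRInt_cont. intros z Hz. rewrite Rmin_left, Rmax_right in Hz by lra. apply Jinv_cont.
      specialize (HJ e He z Hz). lra. }
    unfold KB. split.
    - replace c with (RInt (fun _ => c) 0 1).
      apply RInt_le; auto. lra. apply exRInt_cont. intros; apply continuity_pt_const; intros ? ?; auto.
      intros a Ha. specialize (HJ e He a (ltac:(lra))). unfold c. apply Rinv_le_contravar. lra.
      assert (Rabs (e * ux a 0) <= (Rabs e0 + r) * P).
      { rewrite Rabs_mult. apply Rmult_le_compat; try apply Rabs_pos. 
        replace e with (e0 + (e - e0)) by ring. eapply Rle_trans; [apply Rabs_triang|lra].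
        apply HP; lra. }
      apply Rabs_def2b in H. lra.
      rewrite (RInt_const (V:=R_CompleteNormedModule) 0 1 c). unfold scal; simpl; unfold mult; simpl; ring.
    - replace (2 / m) with (RInt (fun _ => 2 / m) 0 1).
      apply RInt_le; auto. lra. apply exRInt_cont. intros; apply continuity_pt_const; intros ? ?; auto.
      intros a Ha. specialize (HJ e He a (ltac:(lra))).
      replace (2 / m) with (/ (m / 2)) by (field; lra). apply Rinv_le_contravar; lra.
      rewrite (RInt_const (V:=R_CompleteNormedModule) 0 1 (2 / m)). unfold scal; simpl; unfold mult; simpl; ring. }
  set (A := P * (4 / (m * m))).
  assert (HKd : forall e1 e2, Rabs (e1 - e0) <= r -> Rabs (e2 - e0) <= r -> Rabs (KB e1 - KB e2) <= A * Rabs (e1 - e2)).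
  { intros e1 e2 H1 H2. unfold KB.
    assert (Hex : forall e, Rabs (e - e0) <= r -> ex_RInt (fun a => / (1 - e * ux a 0)) 0 1).
    { intros e He. apply exRInt_cont. intros z Hz. rewrite Rmin_left, Rmax_right in Hz by lra. apply Jinv_cont.
      specialize (HJ e He z Hz). lra. }
    rewrite <- RInt_minus_R by auto.
    replace (A * Rabs (e1 - e2)) with ((1 - 0) * (A * Rabs (e1 - e2))) by ring.
    apply abs_RInt_le_const. lra.
    apply exRInt_cont. intros z Hz. rewrite Rmin_left, Rmax_right in Hz by lra.
    apply (continuity_pt_minus (fun a => / (1 - e1 * ux a 0)) (fun a => / (1 - e2 * ux a 0))); apply Jinv_cont.
    specialize (HJ e1 H1 z Hz). lra. specialize (HJ e2 H2 z Hz). lra.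
    intros a Ha. specialize (HJ e1 H1 a Ha) as J1. specialize (HJ e2 H2 a Ha) as J2. specialize (HP a Ha).
    replace (/ (1 - e1 * ux a 0) - / (1 - e2 * ux a 0)) with ((e1 - e2) * ux a 0 * (/ (1 - e1 * ux a 0) * / (1 - e2 * ux a 0)))
      by (field; split; lra).
    rewrite !Rabs_mult. unfold A.
    assert (Rabs (/ (1 - e1 * ux a 0)) <= 2 / m).
    { rewrite Rabs_pos_eq. replace (2 / m) with (/ (m / 2)) by (field; lra). apply Rinv_le_contravar; lra.
      left; apply Rinv_0_lt_compat; lra. }
    assert (Rabs (/ (1 - e2 * ux a 0)) <= 2 / m).
    { rewrite Rabs_pos_eq. replace (2 / m) with (/ (m / 2)) by (field; lra). apply Rinv_le_contravar; lra.
      left; apply Rinv_0_lt_compat; lra. }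
    replace (P * (4 / (m * m)) * Rabs (e1 - e2)) with (Rabs (e1 - e2) * P * ((2 / m) * (2 / m))) by (field; lra).
    assert (0 <= Rabs (e1 - e2)) by apply Rabs_pos.
    apply Rmult_le_compat. apply Rmult_le_pos; apply Rabs_pos. apply Rmult_le_pos; apply Rabs_pos.
    apply Rmult_le_compat_l; auto. 
    apply Rmult_le_compat; try apply Rabs_pos; auto. }
  exists r, (A * (4 / m) / (c ^ 4)). split; auto. intros e1 e2 H1 H2. split. apply HJ; auto.
  destruct (HK e1 H1) as [K1a K1b]. destruct (HK e2 H2) as [K2a K2b].
  specialize (HKd e1 e2 H1 H2).
  unfold Fk.
  replace (/ KB e1 ^ 2 - / KB e2 ^ 2) with ((KB e2 - KB e1) * ((KB e2 + KB e1) * / (KB e1 ^ 2 * KB e2 ^ 2)))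
    by (field; split; lra).
  rewrite Rabs_mult. rewrite (Rabs_pos_eq ((KB e2 + KB e1) * _)).
  2: { apply Rmult_le_pos. lra. left; apply Rinv_0_lt_compat. apply Rmult_lt_0_compat; apply pow_lt; lra. }
  rewrite <- Rabs_Ropp, Ropp_minus_distr.
  replace (A * (4 / m) / c ^ 4 * Rabs (e1 - e2)) with ((A * Rabs (e1 - e2)) * ((4 / m) * / c ^ 4)) by (field; lra).
  apply Rmult_le_compat; auto. apply Rabs_pos.
  apply Rmult_le_pos. lra. left; apply Rinv_0_lt_compat. apply Rmult_lt_0_compat; apply pow_lt; lra.
  apply Rmult_le_compat. lra. left; apply Rinv_0_lt_compat. apply Rmult_lt_0_compat; apply pow_lt; lra.
  replace (4 / m) with (2 / m + 2 / m) by (field; lra). lra.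
  apply Rinv_le_contravar. apply pow_lt; lra.
  replace (c ^ 4) with (c ^ 2 * c ^ 2) by ring.
  apply Rmult_le_compat; try (apply pow_le; lra); apply pow_incr; lra.
Qed.

Variable eta : R -> R.
Hypothesis Heta0 : eta 0 = 0.
Hypothesis Heta : forall t, 0 <= t < T ->
     derivable_pt_lim eta t (/ (Kbar 0 (fun a => ux a 0) eta t) ^ 2).

Lemma eta_psi : forall t, 0 <= t < T -> eta t = psi t.
Proof.
  intros t Ht. apply (real_induction 0 t (fun r => eta r = psi r)); [lra| |lra].
  intros s Hs IH.
  assert (Hce : forall x, 0 <= x < T -> continuity_pt eta x).
  { intros x Hx. apply derivable_continuous_pt. eexists. apply Heta; auto. }
  assert (Hcp : forall x, 0 <= x < T -> continuity_pt psi x).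
  { intros x Hx. apply derivable_continuous_pt. eexists. apply psi_der; auto. }
  assert (Hes : eta s = psi s).
  { destruct (Req_dec s 0) as [E|E]. subst. rewrite Heta0, Hpsi0; auto.
    apply (left_eq eta psi s s). lra. apply Hce; lra. apply Hcp; lra.
    intros r Hr. apply IH; lra. }
  set (e0 := psi s).
  destruct (continuity_ab_min (fun a => 1 - e0 * ux a 0) 0 1) as [am [Ham Ham2]]. lra.
  { intros c _. apply (rat_cont (fun v => 1 - e0 * v)). apply derivable_continuous_pt.
    apply derivable_pt_minus. apply derivable_pt_const. apply derivable_pt_scal, derivable_pt_id. }
  set (m := 1 - e0 * ux am 0).
  assert (Hm : 0 < m) by (apply J_pos; lra).
  destruct (Lip e0 m Hm Ham) as [r [L [Hr HL]]].
  set (L' := Rabs L).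
  destruct (Hce s (ltac:(lra)) r Hr) as [d1 [Hd1 H1]].
  destruct (Hcp s (ltac:(lra)) r Hr) as [d2 [Hd2 H2]].
  exists (Rmin d1 d2). split. apply Rmin_case; lra.
  intros r' Hr' Hr't.
  assert (Rmin d1 d2 <= d1) by apply Rmin_l. assert (Rmin d1 d2 <= d2) by apply Rmin_r.
  assert (Hnear : forall x, s <= x < s + Rmin d1 d2 -> Rabs (eta x - e0) <= r /\ Rabs (psi x - e0) <= r).
  { intros x Hx. destruct (Req_dec x s). subst x. unfold e0. rewrite Hes, Rminus_diag, Rabs_R0. lra.
    split.
    - unfold e0. rewrite <- Hes. left. apply H1. split. split; [exact Logic.I|auto]. simpl; unfold R_dist.
      rewrite Rabs_right; lra.
    - left. apply H2. split. split; [exact Logic.I|auto]. simpl; unfold R_dist. rewrite Rabs_right; lra. }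
  assert (Hder_eta : forall x, s <= x < s + Rmin d1 d2 -> x <= t -> derivable_pt_lim eta x (Fk (eta x))).
  { intros x Hx Hxt. apply der_eq with (/ (Kbar 0 (fun a => ux a 0) eta x) ^ 2). apply Heta; lra.
    unfold Fk. rewrite Kbar0_eq; auto. destruct (Hnear x Hx) as [He _].
    destruct (HL (eta x) (eta x) He He) as [HJ _]. intros a Ha. specialize (HJ a Ha). lra. }
  assert (Hder_psi : forall x, 0 <= x < T -> derivable_pt_lim psi x (Fk (psi x))).
  { intros x Hx. apply der_eq with (/ (h a0 x)^2). apply psi_der; auto.
    unfold Fk, KB. rewrite int1; auto. }
  destruct (Req_dec r' s) as [E|E]. subst r'. auto.
  set (E2 := fun x => (eta x - psi x) * (eta x - psi x) * exp (- (2 * L') * x)).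
  assert (HE : E2 r' <= E2 s).
  { apply (nonincr E2 (fun x => ((Fk (eta x) - Fk (psi x)) * (eta x - psi x) + (eta x - psi x) * (Fk (eta x) - Fk (psi x))) * exp (- (2 * L') * x)
       + (eta x - psi x) * (eta x - psi x) * (exp (- (2 * L') * x) * (- (2 * L') * 1)))). lra.
    - intros c Hc. unfold E2.
      apply (derivable_pt_lim_mult (fun x => (eta x - psi x) * (eta x - psi x)) (fun x => exp (- (2 * L') * x))).
      apply (derivable_pt_lim_mult (fun x => eta x - psi x) (fun x => eta x - psi x));
      apply (derivable_pt_lim_minus eta psi); (apply Hder_eta; lra) || (apply Hder_psi; lra).
      apply (derivable_pt_lim_comp (fun x => - (2 * L') * x) exp).
      apply (derivable_pt_lim_scal id). apply derivable_pt_lim_id. apply derivable_pt_lim_exp.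
    - intros c Hc. unfold E2.
      apply (continuity_pt_mult (fun x => (eta x - psi x) * (eta x - psi x)) (fun x => exp (- (2 * L') * x))).
      apply (continuity_pt_mult (fun x => eta x - psi x) (fun x => eta x - psi x));
      apply (continuity_pt_minus eta psi); (apply Hce; lra) || (apply Hcp; lra).
      apply (continuity_pt_comp (fun x => - (2 * L') * x) exp).
      apply derivable_continuous_pt. eexists. apply (derivable_pt_lim_scal id). apply derivable_pt_lim_id.
      apply derivable_continuous_pt, derivable_pt_exp.
    - intros c Hc. destruct (Hnear c (ltac:(lra))) as [N1 N2].
      destruct (HL (eta c) (psi c) N1 N2) as [_ HLc].
      assert (Hex : 0 < exp (- (2 * L') * c)) by apply exp_pos.
      assert (HLL : Rabs (Fk (eta c) - Fk (psi c)) <= L' * Rabs (eta c - psi c)).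
      { eapply Rle_trans; [apply HLc|]. apply Rmult_le_compat_r. apply Rabs_pos. apply RRle_abs. }
      assert (Hk : 2 * ((Fk (eta c) - Fk (psi c)) * (eta c - psi c)) <= 2 * L' * ((eta c - psi c) * (eta c - psi c))).
      { eapply Rle_trans. apply Rmult_le_compat_l. lra. apply RRle_abs. rewrite Rabs_mult.
        assert (HH : Rabs (eta c - psi c) * Rabs (eta c - psi c) = (eta c - psi c) * (eta c - psi c))
          by (rewrite <- Rabs_mult; apply Rabs_pos_eq; apply Rle_0_sqr).
        rewrite <- HH. rewrite <- Rmult_assoc. replace (2 * L' * (Rabs (eta c - psi c) * Rabs (eta c - psi c)))
          with (2 * (L' * Rabs (eta c - psi c)) * Rabs (eta c - psi c)) by ring.
        apply Rmult_le_compat_r. apply Rabs_pos. apply Rmult_le_compat_l. lra. exact HLL. }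
      set (dd := eta c - psi c) in *. set (ff := Fk (eta c) - Fk (psi c)) in *.
      set (ee := exp (- (2 * L') * c)) in *.
      replace ((ff * dd + dd * ff) * ee + dd * dd * (ee * (- (2 * L') * 1)))
        with (ee * (2 * (ff * dd) - 2 * L' * (dd * dd))) by ring.
      rewrite <- (Rmult_0_r ee). apply Rmult_le_compat_l; lra. }
  unfold E2 in HE. rewrite Hes, Rminus_diag, !Rmult_0_l in HE.
  assert (0 < exp (- (2 * L') * r')) by apply exp_pos.
  assert ((eta r' - psi r') * (eta r' - psi r') <= 0).
  { apply Rmult_le_reg_r with (exp (- (2 * L') * r')); auto. lra. }
  nra.
Qed.

Lemma concl : forall alpha t, 0 <= alpha <= 1 -> 0 <= t < T ->
    0 < J (fun a => ux a 0) eta alpha t /\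
    derivable_pt_lim (fun a => gamma a t) alpha
      (K 0 (fun a => ux a 0) eta alpha t / Kbar 0 (fun a => ux a 0) eta t) /\
    (0 < t ->
     ux (gamma alpha t) t =
       / (eta t * (Kbar 0 (fun a => ux a 0) eta t) ^ 2) *
       (/ J (fun a => ux a 0) eta alpha t -
        Kbar 1 (fun a => ux a 0) eta t / Kbar 0 (fun a => ux a 0) eta t)).
Proof.
  intros alpha t Ha Ht.
  assert (Ee : eta t = psi t) by (apply eta_psi; auto).
  assert (HJ : forall a, 0 <= a <= 1 -> 0 < 1 - eta t * ux a 0) by (intros; rewrite Ee; apply J_pos; auto).
  assert (EK0 : Kbar 0 (fun a => ux a 0) eta t = h a0 t).
  { rewrite Kbar0_eq by auto. rewrite Ee. unfold KB. apply int1; auto. }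
  assert (EK1 : Kbar 1 (fun a => ux a 0) eta t = KB1 (psi t)).
  { rewrite Kbar1_eq by auto. rewrite Ee; auto. }
  assert (Hh : 0 < h a0 t) by apply h_pos.
  assert (HJa := HJ alpha Ha).
  unfold J. rewrite EK0, EK1. split; [|split].
  - auto.
  - apply der_eq with (/ h alpha t). apply gamma_der; auto.
    rewrite (Hid alpha t) by auto. unfold K, J. simpl. rewrite Ee in *. field. lra.
  - intros Ht0. rewrite (final_w alpha t) by (auto; lra). rewrite Ee. unfold KB1. auto.
Qed.

End Ric.


Lemma shift_der : forall f x l, derivable_pt_lim f (x + 1) l -> derivable_pt_lim (fun y => f (y + 1)) x l.
Proof.
  intros f x l H. apply der_eq with (l * (1 + 0)).
  apply (derivable_pt_lim_comp (fun y => y + 1) f).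
  apply (derivable_pt_lim_plus id (fun _ => 1)). apply derivable_pt_lim_id. apply derivable_pt_lim_const.
  auto. ring.
Qed.

Lemma per_der : forall (f : R -> R) l1 l2 x, (forall y, f (y + 1) = f y) ->
  derivable_pt_lim f (x + 1) l1 -> derivable_pt_lim f x l2 -> l1 = l2.
Proof.
  intros f l1 l2 x Hp H1 H2. apply shift_der in H1.
  replace (fun y => f (y + 1)) with f in H1 by (apply functional_extensionality; intro; rewrite Hp; auto).
  eapply uniqueness_limite; eauto.
Qed.

Lemma periodic_reduce : forall (G : R -> R), (forall y, G (y + 1) = G y) ->
  forall x, exists x0, 0 <= x0 <= 1 /\ G x = G x0.
Proof.
  intros G HG x.
  assert (Hn : forall n : nat, forall y, G (y + INR n) = G y).
  { induction n; intros y. simpl. rewrite Rplus_0_r; auto.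
    rewrite S_INR. replace (y + (INR n + 1)) with ((y + INR n) + 1) by ring. rewrite HG; auto. }
  destruct (base_Int_part x) as [H1 H2].
  set (k := Int_part x) in *. exists (x - IZR k). split. lra.
  destruct (Z_le_gt_dec 0 k) as [Hk|Hk].
  - rewrite <- (Z2Nat.id k) in * by auto. rewrite <- INR_IZR_INZ in *.
    rewrite <- (Hn (Z.to_nat k) (x - INR (Z.to_nat k))). f_equal; ring.
  - assert (Ek : IZR k = - INR (Z.to_nat (- k))).
    { rewrite INR_IZR_INZ, Z2Nat.id by lia. rewrite opp_IZR. ring. }
    rewrite Ek. rewrite <- (Hn (Z.to_nat (- k)) x). f_equal; ring.
Qed.

Theorem mainTheorem3
  (T delta : R) (u ux uxx uxt : R -> R -> R) (eta : R -> R) (gamma : R -> R -> R)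
  (HT : 0 < T) (Hdelta : 0 < delta)
  (Hsmooth : smooth_on (strip delta T) u)
  (Hux : is_dx_on (strip delta T) u ux)
  (Huxx : is_dx_on (strip delta T) ux uxx)
  (Huxt : is_dt_on (strip delta T) ux uxt)
  (Hbc : (forall x t, 0 <= t < T -> u (x + 1) t = u x t) \/
         (forall t, 0 <= t < T -> u 0 t = 0 /\ u 1 t = 0))
  (Hpde : forall x t, 0 <= x <= 1 -> 0 < t < T ->
     uxt x t + u x t * uxx x t - (ux x t) ^ 2
       = - 2 * Defs.RInt (fun y => (ux y t) ^ 2) 0 1)
  (Heta0 : eta 0 = 0)
  (Heta : forall t, 0 <= t < T ->
     derivable_pt_lim eta t (/ (Kbar 0 (fun a => ux a 0) eta t) ^ 2))
  (Hgamma0 : forall alpha, gamma alpha 0 = alpha)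
  (Hgamma : forall alpha t, 0 < t < T ->
     derivable_pt_lim (fun s => gamma alpha s) t (u (gamma alpha t) t))
  (Hgamma_rc : forall alpha eps, 0 < eps -> exists d, 0 < d /\
     forall s, 0 <= s < d -> Rabs (gamma alpha s - alpha) < eps) :
  forall alpha t, 0 <= alpha <= 1 -> 0 <= t < T ->
    0 < J (fun a => ux a 0) eta alpha t /\
    derivable_pt_lim (fun a => gamma a t) alpha
      (K 0 (fun a => ux a 0) eta alpha t / Kbar 0 (fun a => ux a 0) eta t) /\
    (0 < t ->
     ux (gamma alpha t) t =
       / (eta t * (Kbar 0 (fun a => ux a 0) eta t) ^ 2) *
       (/ J (fun a => ux a 0) eta alpha t -
        Kbar 1 (fun a => ux a 0) eta t / Kbar 0 (fun a => ux a 0) eta t)).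
Proof.
  assert (Reg := smooth_regularity delta T u ux uxx uxt Hdelta Hsmooth Hux Huxx Huxt).
  assert (Hsol : forall a, sol T u (gamma a)).
  { intro a. split. intros t Ht; apply Hgamma; auto.
    intros eps Heps. destruct (Hgamma_rc a eps Heps) as [d [Hd H]]. exists d. split; auto.
    intros s Hs. rewrite Hgamma0. auto. }
  assert (LC' := LC T delta u ux uxx uxt HT Hdelta Reg Hux).
  set (I := fun t => - 2 * Defs.RInt (fun y => (ux y t) ^ 2) 0 1).
  assert (Hboth : (forall a t, 0 <= a <= 1 -> 0 < t < T ->
     uxt (gamma a t) t + u (gamma a t) t * uxx (gamma a t) t - (ux (gamma a t) t)^2 = I t) /\
     (forall t, 0 <= t < T -> gamma 1 t - gamma 0 t = 1 /\ u (gamma 1 t) t = u (gamma 0 t) t) /\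
     u 1 0 = u 0 0).
  { destruct Hbc as [Hper|Hdir].
    - assert (Hs1 : sol T u (fun s => gamma 0 s + 1)).
      { split.
        - intros t Ht. apply der_eq with (u (gamma 0 t) t + 0).
          apply (derivable_pt_lim_plus (gamma 0) (fun _ => 1)). apply Hgamma; auto. apply derivable_pt_lim_const.
          rewrite Hper by lra. ring.
        - intros eps Heps. destruct (Hsol 0) as [_ Hr]. destruct (Hr eps Heps) as [d [Hd H]].
          exists d. split; auto. intros s Hs. replace (gamma 0 s + 1 - (gamma 0 0 + 1)) with (gamma 0 s - gamma 0 0) by ring.
          auto. }
      assert (G1 : forall t, 0 <= t < T -> gamma 1 t = gamma 0 t + 1).
      { intros t Ht. assert (HH := LC' (gamma 1) (fun s => gamma 0 s + 1) (Hsol 1) Hs1 t Ht).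
        rewrite !Hgamma0 in HH. replace (1 - (0 + 1)) with 0 in HH by ring. lra. }
      assert (Pux : forall x t, 0 <= t < T -> ux (x + 1) t = ux x t).
      { intros x t Ht. apply (per_der (fun y => u y t) (ux (x + 1) t) (ux x t) x).
        intros; apply Hper; auto. apply Hux; unfold strip; lra. apply Hux; unfold strip; lra. }
      assert (Puxx : forall x t, 0 <= t < T -> uxx (x + 1) t = uxx x t).
      { intros x t Ht. apply (per_der (fun y => ux y t) (uxx (x + 1) t) (uxx x t) x).
        intros; apply Pux; auto. apply Huxx; unfold strip; lra. apply Huxx; unfold strip; lra. }
      assert (Puxt : forall x t, 0 < t < T -> uxt (x + 1) t = uxt x t).
      { intros x t Ht. eapply uniqueness_limite. apply Huxt; unfold strip; lra.
        apply (der_ext_loc (fun s => ux x s) _ t (Rmin t (T - t))). apply Rmin_case; lra.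
        intros y Hy. assert (Rmin t (T - t) <= t) by apply Rmin_l. assert (Rmin t (T - t) <= T - t) by apply Rmin_r.
        apply Rabs_def2 in Hy. rewrite Pux; auto. lra.
        apply Huxt; unfold strip; lra. }
      split; [|split].
      + intros a t Ha Ht.
        destruct (periodic_reduce (fun x => uxt x t + u x t * uxx x t - (ux x t)^2)) with (x := gamma a t)
          as [x0 [Hx0 E]].
        { intros y. rewrite Pux, Puxx, Puxt, Hper by lra. auto. }
        cbv beta in E. rewrite E. apply Hpde; auto.
      + intros t Ht. rewrite G1 by auto. split. ring. apply Hper; auto.
      + replace 1 with (0 + 1) by ring. apply Hper; lra.
    - assert (Hc : forall c, (c = 0 \/ c = 1) -> sol T u (fun _ => c)).
      { intros c Hc. split.
        - intros t Ht. apply der_eq with 0. apply derivable_pt_lim_const.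
          destruct (Hdir t (ltac:(lra))). destruct Hc; subst; auto.
        - intros eps Heps. exists 1. split. lra. intros. rewrite Rminus_diag, Rabs_R0; auto. }
      assert (G0 : forall t, 0 <= t < T -> gamma 0 t = 0).
      { intros t Ht. assert (HH := LC' (gamma 0) (fun _ => 0) (Hsol 0) (Hc 0 (or_introl eq_refl)) t Ht).
        rewrite Hgamma0 in HH. lra. }
      assert (G1 : forall t, 0 <= t < T -> gamma 1 t = 1).
      { intros t Ht. assert (HH := LC' (gamma 1) (fun _ => 1) (Hsol 1) (Hc 1 (or_intror eq_refl)) t Ht).
        rewrite Hgamma0 in HH. lra. }
      split; [|split].
      + intros a t Ha Ht. apply Hpde; [|auto].
        assert (H1 := LC' (gamma a) (gamma 0) (Hsol a) (Hsol 0) t (ltac:(lra))).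
        assert (H2 := LC' (gamma 1) (gamma a) (Hsol 1) (Hsol a) t (ltac:(lra))).
        rewrite !Hgamma0 in H1, H2. rewrite G0 in H1 by lra. rewrite G1 in H2 by lra.
        assert (E1 := exp_pos (RInt (qf u ux (gamma a) (gamma 0)) 0 t)).
        assert (E2 := exp_pos (RInt (qf u ux (gamma 1) (gamma a)) 0 t)).
        split; nra.
      + intros t Ht. rewrite G0, G1 by auto. split. ring. destruct (Hdir t Ht); lra.
      + destruct (Hdir 0 (ltac:(lra))); lra. }
  destruct Hboth as [Hpde' [Hends Hu10]].
  destruct (mvt_int (fun x => u x 0) (fun x => ux x 0) 0 1) as [a0 [Ha0 Ea0]]. lra.
  { intros c Hc. apply Hux. unfold strip; lra. }
  { intros c Hc. apply derivable_continuous_pt. exists (ux c 0). apply Hux. unfold strip; lra. }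
  assert (Hp0 : ux a0 0 = 0) by (simpl in Ea0; lra).
  destruct (structure T delta u ux uxx uxt HT Hdelta Reg Hux Huxx Huxt gamma Hsol Hgamma0 I Hpde' a0
     (ltac:(lra)) Hp0) as [psi [Hpsi0 [_ [Hid Hpsid]]]].
  intros alpha t Ha Ht.
  exact (concl T delta u ux uxx uxt HT Hdelta Reg Hux gamma Hsol Hgamma0 Hends a0 psi Hpsi0 Hid Hpsid
    eta Heta0 Heta alpha t Ha Ht).
Qed.
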